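(* Let $\omega\colon\mathbf Z_+\to(0,+\infty)$ be a weight which is bounded from below, such that $\sum_{n\ge0}1/\omega(k2^n)<+\infty$ for every $k\ge3$, and such that $\mathcal T$ is bounded on $\mathcal X_\omega$. Then $\mathcal T$ is chaotic on $\mathcal X_\omega$, i.e. it is hypercyclic (has a vector with dense orbit) and its set of periodic points $\{f:\ \mathcal T^Nf=f\text{ for some }N\ge1\}$ is dense in $\mathcal X_\omega$. In particular this holds for $\omega=\omega_0$, $\omega_0(n)=(n+1)/\pi$.
   Context: $T\colon\mathbf Z_+\to\mathbf Z_+$ is the modified Collatz map: $T(n)=n/2$ for $n$ even, $T(n)=(3n+1)/2$ for $n$ odd. $\mathcal X_\omega$ is the Hilbert space of holomorphic functions $f(z)=\sum_{n\ge3}c_nz^n$ on the unit disk with $\|f\|_\omega^2=\sum_{n\ge3}|c_n|^2/\omega(n)<\infty$. $\mathcal T\sum_{n\ge3}c_nz^n=\sum_{j\ge3,\,T(j)\ge3}c_jz^{T(j)}$. $\mathcal T$ is bounded on $\mathcal X_\omega$ iff the sequences $\omega(6m)/\omega(3m)$, $\omega(6m+2)/\omega(3m+1)$, $(\omega(6m+4)+\omega(2m+1))/\omega(3m+2)$ ($m\ge1$) are bounded; this holds for $\omega_0$. *)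

(* Defs.v *)
From Stdlib Require Import Reals Lra Lia Arith.
From Coquelicot Require Import Coquelicot.
Open Scope R_scope.

Definition Tcol (n : nat) : nat :=
  if Nat.even n then Nat.div n 2 else Nat.div (3 * n + 1) 2.

(* Elements of X_omega are represented by their Taylor coefficient sequences
   c : nat -> C, f(z) = sum_{n>=3} c_n z^n. *)
Definition coeffs := nat -> C.

(* f is holomorphic on the unit disk: the power series has radius >= 1. *)
Definition holo_disk (c : coeffs) : Prop :=
  forall r : R, 0 <= r < 1 -> ex_series (fun n => Cmod (c n) * r ^ n).

Definition wsum (omega : nat -> R) (c : coeffs) : nat -> R :=
  fun n => (Cmod (c n)) ^ 2 / omega n.

Definition in_X (omega : nat -> R) (c : coeffs) : Prop :=
  (forall n, (n < 3)%nat -> c n = (RtoC 0)) /\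
  holo_disk c /\
  ex_series (wsum omega c).

Definition normX (omega : nat -> R) (c : coeffs) : R :=
  sqrt (Series (wsum omega c)).

Definition csub (f g : coeffs) : coeffs := fun n => Cminus (f n) (g n).

(* The operator  T(sum_{n>=3} c_n z^n) = sum_{j>=3, T(j)>=3} c_j z^{T(j)}.
   Coefficient of z^m: sum of c_j over j >= 3 with T(j) = m (m >= 3).
   Since T(j) >= j/2, such j satisfy j <= 2m, so the sum is finite. *)
Definition Top (c : coeffs) : coeffs :=
  fun m => if (3 <=? m)%nat then
             sum_n (fun j => if andb (3 <=? j)%nat (Tcol j =? m)%nat then c j else (RtoC 0))
                   (2 * m)%nat
           else (RtoC 0).

Definition T_bounded (omega : nat -> R) : Prop :=
  (forall c, in_X omega c -> in_X omega (Top c)) /\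
  exists M : R, forall c, in_X omega c -> normX omega (Top c) <= M * normX omega c.

Definition hypercyclic (omega : nat -> R) : Prop :=
  exists f, in_X omega f /\
    forall g, in_X omega g -> forall eps, 0 < eps ->
      exists N : nat, normX omega (csub (Nat.iter N Top f) g) < eps.

Definition dense_periodic (omega : nat -> R) : Prop :=
  forall g, in_X omega g -> forall eps, 0 < eps ->
    exists f, in_X omega f /\
      (exists N : nat, (1 <= N)%nat /\ Nat.iter N Top f = f) /\
      normX omega (csub f g) < eps.

Definition chaotic (omega : nat -> R) : Prop :=
  hypercyclic omega /\ dense_periodic omega.

Definition omega0 (n : nat) : R := INR (n + 1) / PI.

(* Main.v *)
Require Import Defs.
From Stdlib Require Import Reals Lra Lia FunctionalExtensionality IndefiniteDescription ZArith Cantor.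
From Coquelicot Require Import Coquelicot.
Open Scope R_scope.

Ltac Cring := repeat match goal with |- context [@sum_n ?G ?f ?n] => let s := fresh "s" in generalize (@sum_n G f n); intro s; try change C in s end;
  match goal with |- ?a = ?b => change (@eq C a b); ring end.
Ltac Rring := repeat match goal with |- context [@sum_n ?G ?f ?n] => let s := fresh "s" in generalize (@sum_n G f n); intro s; try change R in s end;
  match goal with |- ?a = ?b => change (@eq R a b); simpl; first [ring | lra | nra] end.
Ltac div2 n := pose proof (Nat.div_mod n 2 ltac:(lia)); pose proof (Nat.mod_upper_bound n 2 ltac:(lia)).

Lemma even_double n : Nat.even n = true -> n = (2 * (n / 2))%nat.
Proof. intros H. apply Nat.even_spec in H. destruct H as [k ->].
  rewrite Nat.mul_comm, Nat.div_mul; lia. Qed.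

Lemma odd_double n : Nat.even n = false -> n = (2 * (n / 2) + 1)%nat.
Proof. intros H. div2 n. destruct (Nat.eq_dec (n mod 2) 0) as [E|E].
  - exfalso. assert (Nat.even n = true); [|congruence].
    apply Nat.even_spec. exists (n/2)%nat. lia.
  - lia. Qed.

Lemma div2_double k : ((2 * k) / 2 = k)%nat.
Proof. rewrite Nat.mul_comm, Nat.div_mul; lia. Qed.

Lemma even_2k k : Nat.even (2 * k) = true.
Proof. apply Nat.even_spec. exists k; lia. Qed.

Lemma Tcol_ge y : (y <= 2 * Tcol y)%nat.
Proof. unfold Tcol. destruct (Nat.even y) eqn:E.
  - pose proof (even_double y E). lia.
  - div2 (3*y+1)%nat. lia. Qed.

Lemma Tcol_double m : Tcol (2 * m) = m.
Proof. unfold Tcol. rewrite even_2k. apply div2_double. Qed.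

Lemma Tcol_even_inv j m : Nat.even j = true -> Tcol j = m -> j = (2 * m)%nat.
Proof. intros E H. unfold Tcol in H. rewrite E in H. pose proof (even_double j E). lia. Qed.

Lemma Tcol_odd_pair b : Nat.even b = false -> Tcol b = Tcol (3 * b + 1).
Proof. intros E. unfold Tcol. rewrite E.
  pose proof (odd_double b E) as Hb.
  assert (Nat.even (3 * b + 1) = true) as E2.
  { apply Nat.even_spec. exists (3 * (b/2) + 2)%nat. lia. }
  rewrite E2. f_equal. Qed.

Definition czero : coeffs := fun _ => RtoC 0.
Definition cadd (f g : coeffs) : coeffs := fun n => Cplus (f n) (g n).
Definition cscal (a : C) (f : coeffs) : coeffs := fun n => Cmult a (f n).
Definition mono (x : nat) : coeffs := fun n => if Nat.eqb n x then RtoC 1 else RtoC 0.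
Definition Sh (f : coeffs) : coeffs := fun n => if Nat.even n then f (Nat.div n 2) else RtoC 0.
Definition low0 (f : coeffs) := forall n, (n < 3)%nat -> f n = RtoC 0.
Definition csum (F : nat -> coeffs) (K : nat) : coeffs := fun n => sum_n (fun i => F i n) K.

Lemma sum_Sn_C (u : nat -> C) n : (sum_n u (S n) : C) = Cplus (sum_n u n) (u (S n)).
Proof. exact (sum_Sn u n). Qed.
Lemma sum_O_C (u : nat -> C) : (sum_n u 0 : C) = u 0%nat.
Proof. exact (sum_O u). Qed.

Lemma sum_n_Cplus (u v : nat -> C) n :
  (sum_n (fun k => Cplus (u k) (v k)) n : C) = Cplus (sum_n u n) (sum_n v n).
Proof. induction n.
  - rewrite !sum_O_C. reflexivity.
  - rewrite !sum_Sn_C, IHn. ring. Qed.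

Lemma sum_n_Cscal (a : C) (u : nat -> C) n :
  (sum_n (fun k => Cmult a (u k)) n : C) = Cmult a (sum_n u n).
Proof. induction n.
  - rewrite !sum_O_C. reflexivity.
  - rewrite !sum_Sn_C, IHn. ring. Qed.

Lemma sum_n_C0 (u : nat -> C) N : (forall j, (j <= N)%nat -> u j = RtoC 0) -> (sum_n u N : C) = RtoC 0.
Proof. induction N; intros H.
  - rewrite sum_O_C. apply H. lia.
  - rewrite sum_Sn_C, IHN by (intros; apply H; lia). rewrite H by lia. ring. Qed.

Lemma sum_n_single (u : nat -> C) N k : (k <= N)%nat ->
  (forall j, (j <= N)%nat -> j <> k -> u j = RtoC 0) -> (sum_n u N : C) = u k.
Proof. induction N; intros Hk H.
  - assert (k = 0%nat) by lia. subst. apply sum_O.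
  - rewrite sum_Sn_C.
    destruct (Nat.eq_dec k (S N)) as [->|Hne].
    + rewrite sum_n_C0. ring. intros j Hj. apply H; lia.
    + rewrite IHN by (try lia; intros; apply H; lia). rewrite (H (S N)) by lia. ring. Qed.

Lemma Top_add f g : Top (cadd f g) = cadd (Top f) (Top g).
Proof. apply functional_extensionality; intro m. unfold Top, cadd.
  destruct (3 <=? m)%nat.
  - rewrite <- sum_n_Cplus. apply sum_n_ext. intro j. destruct andb; [reflexivity| Cring].
  - ring. Qed.

Lemma Top_scal a f : Top (cscal a f) = cscal a (Top f).
Proof. apply functional_extensionality; intro m. unfold Top, cscal.
  destruct (3 <=? m)%nat.
  - rewrite <- sum_n_Cscal. apply sum_n_ext. intro j. destruct andb; [reflexivity| Cring].
  - ring. Qed.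

Lemma Top_zero : Top czero = czero.
Proof. apply functional_extensionality; intro m. unfold Top, czero.
  destruct (3 <=? m)%nat; [|reflexivity].
  apply sum_n_C0. intros. destruct andb; reflexivity. Qed.

Lemma Top_low f : low0 (Top f).
Proof. intros n Hn. unfold Top. destruct (3 <=? n)%nat eqn:E; [|reflexivity].
  apply Nat.leb_le in E. lia. Qed.

Lemma Top_mono y m : Top (mono y) m =
  if andb (andb (3 <=? m)%nat (3 <=? y)%nat) (Tcol y =? m)%nat then RtoC 1 else RtoC 0.
Proof. unfold Top. destruct (3 <=? m)%nat eqn:Em; [|reflexivity]. simpl.
  destruct (Nat.le_gt_cases y (2 * m)) as [Hy|Hy].
  - rewrite (sum_n_single _ _ y Hy).
    + unfold mono. rewrite Nat.eqb_refl. reflexivity.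
    + intros j _ Hj. unfold mono. apply Nat.eqb_neq in Hj. rewrite Hj. destruct andb; reflexivity.
  - rewrite sum_n_C0.
    + pose proof (Tcol_ge y). destruct (Tcol y =? m)%nat eqn:E.
      * apply Nat.eqb_eq in E. lia.
      * rewrite Bool.andb_false_r. reflexivity.
    + intros j Hj. unfold mono. assert (j <> y) by lia. apply Nat.eqb_neq in H. rewrite H.
      destruct andb; reflexivity. Qed.

Lemma Top_Sh f : low0 f -> Top (Sh f) = f.
Proof. intros Hf. apply functional_extensionality; intro m. unfold Top.
  destruct (3 <=? m)%nat eqn:Em.
  - apply Nat.leb_le in Em. rewrite (sum_n_single _ _ (2 * m)); [ | lia | ].
    + assert ((3 <=? 2 * m)%nat = true) as -> by (apply Nat.leb_le; lia).
      rewrite Tcol_double, Nat.eqb_refl. unfold Sh. rewrite even_2k, div2_double. reflexivity.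
    + intros j _ Hj. destruct (andb (3 <=? j)%nat (Tcol j =? m)%nat) eqn:E; [|reflexivity].
      apply andb_prop in E. destruct E as [_ E]. apply Nat.eqb_eq in E.
      unfold Sh. destruct (Nat.even j) eqn:Ej; [|reflexivity].
      exfalso. apply Hj. apply Tcol_even_inv; auto.
  - apply Nat.leb_gt in Em. symmetry. apply Hf. lia. Qed.

Lemma Sh_mono x : Sh (mono x) = mono (2 * x).
Proof. apply functional_extensionality; intro n. unfold Sh, mono.
  destruct (Nat.even n) eqn:E.
  - pose proof (even_double n E). destruct (n / 2 =? x)%nat eqn:E1.
    + apply Nat.eqb_eq in E1. assert ((n =? 2 * x)%nat = true) as -> by (apply Nat.eqb_eq; lia). reflexivity.
    + apply Nat.eqb_neq in E1. assert ((n =? 2 * x)%nat = false) as -> by (apply Nat.eqb_neq; lia). reflexivity.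
  - pose proof (odd_double n E). assert ((n =? 2 * x)%nat = false) as -> by (apply Nat.eqb_neq; lia). reflexivity. Qed.

Lemma Sh_low f : low0 f -> low0 (Sh f).
Proof. intros Hf n Hn. unfold Sh. destruct (Nat.even n) eqn:E; [|reflexivity].
  apply Hf. pose proof (even_double n E). lia. Qed.

Lemma iterSh_low k f : low0 f -> low0 (Nat.iter k Sh f).
Proof. intros Hf. induction k; simpl; auto. apply Sh_low; auto. Qed.

Lemma iterTop_Sh k f : low0 f -> Nat.iter k Top (Nat.iter k Sh f) = f.
Proof. intros Hf. induction k; [reflexivity|].
  rewrite Nat.iter_succ_r, Nat.iter_succ. rewrite Top_Sh by (apply iterSh_low; auto). exact IHk. Qed.

Lemma iterTop_add k f g : Nat.iter k Top (cadd f g) = cadd (Nat.iter k Top f) (Nat.iter k Top g).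
Proof. induction k; [reflexivity|]. simpl. rewrite IHk. apply Top_add. Qed.

Lemma iterTop_scal k a f : Nat.iter k Top (cscal a f) = cscal a (Nat.iter k Top f).
Proof. induction k; [reflexivity|]. simpl. rewrite IHk. apply Top_scal. Qed.

Lemma iterTop_zero k : Nat.iter k Top czero = czero.
Proof. induction k; [reflexivity|]. simpl. rewrite IHk. apply Top_zero. Qed.

Lemma iterSh_mono k x : Nat.iter k Sh (mono x) = mono (2 ^ k * x).
Proof. induction k; simpl. f_equal; lia. rewrite IHk, Sh_mono. f_equal. lia. Qed.

Lemma mono_low x : (3 <= x)%nat -> low0 (mono x).
Proof. intros Hx n Hn. unfold mono. assert ((n =? x)%nat = false) as -> by (apply Nat.eqb_neq; lia). reflexivity. Qed.

Definition good (f : coeffs) : Prop :=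
  low0 f /\ (exists D, forall n, (D < n)%nat -> f n = RtoC 0) /\
  (exists K, Nat.iter K Top f = czero).

Lemma kill_mono f K K' : Nat.iter K Top f = czero -> (K <= K')%nat -> Nat.iter K' Top f = czero.
Proof. intros H HK. replace K' with ((K' - K) + K)%nat by lia.
  rewrite Nat.iter_add, H. apply iterTop_zero. Qed.

Lemma good_zero : good czero.
Proof. split; [|split].
  - intros n _. reflexivity.
  - exists 0%nat. reflexivity.
  - exists 0%nat. reflexivity. Qed.

Lemma good_add f g : good f -> good g -> good (cadd f g).
Proof. intros [Lf [[Df Hf] [Kf Tf]]] [Lg [[Dg Hg] [Kg Tg]]]. split; [|split].
  - intros n Hn. unfold cadd. rewrite Lf, Lg by auto. Cring.
  - exists (Df + Dg)%nat. intros n Hn. unfold cadd. rewrite Hf, Hg by lia. Cring.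
  - exists (Kf + Kg)%nat. rewrite iterTop_add. rewrite (kill_mono f Kf), (kill_mono g Kg) by (auto; lia).
    apply functional_extensionality. intro n. unfold cadd, czero. Cring. Qed.

Lemma good_scal a f : good f -> good (cscal a f).
Proof. intros [Lf [[Df Hf] [Kf Tf]]]. split; [|split].
  - intros n Hn. unfold cscal. rewrite Lf by auto. Cring.
  - exists Df. intros n Hn. unfold cscal. rewrite Hf by lia. Cring.
  - exists Kf. rewrite iterTop_scal, Tf.
    apply functional_extensionality. intro n. unfold cscal, czero. Cring. Qed.

Lemma csub_eq f g : csub f g = cadd f (cscal (Copp (RtoC 1)) g).
Proof. apply functional_extensionality. intro n. unfold csub, cadd, cscal.
  Cring. Qed.

Lemma good_sub f g : good f -> good g -> good (csub f g).
Proof. intros. rewrite csub_eq. apply good_add; auto. apply good_scal; auto. Qed.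

Lemma csum_S F K : csum F (S K) = cadd (csum F K) (F (S K)).
Proof. apply functional_extensionality. intro n. unfold csum, cadd. apply sum_Sn_C. Qed.

Lemma csum_O F : csum F 0 = F 0%nat.
Proof. apply functional_extensionality. intro n. unfold csum. apply sum_O_C. Qed.

Lemma good_csum F K : (forall i, (i <= K)%nat -> good (F i)) -> good (csum F K).
Proof. induction K; intros H.
  - rewrite csum_O. apply H. lia.
  - rewrite csum_S. apply good_add. apply IHK. intros; apply H; lia. apply H; lia. Qed.

Lemma iterTop_Sh_gen j k f : low0 f -> Nat.iter (j + k) Top (Nat.iter k Sh f) = Nat.iter j Top f.
Proof. intros Hf. rewrite Nat.iter_add, iterTop_Sh; auto. Qed.

Lemma decomp x : (1 <= x)%nat -> exists n b, Nat.even b = false /\ x = (2 ^ n * b)%nat.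
Proof. induction x as [x IH] using (well_founded_induction Wf_nat.lt_wf). intros Hx.
  destruct (Nat.even x) eqn:E.
  - pose proof (even_double x E). destruct (IH (x/2)%nat) as [n [b [Hb Hxb]]]; try lia.
    exists (S n), b. split; auto. simpl. lia.
  - exists 0%nat, x. split; auto. simpl. lia. Qed.

Lemma Top_mono4 : Top (mono 4) = czero.
Proof. apply functional_extensionality. intro m. rewrite Top_mono. unfold czero.
  assert (Tcol 4 = 2%nat) as -> by reflexivity.
  destruct (3 <=? m)%nat eqn:E; [|reflexivity]. apply Nat.leb_le in E.
  assert ((2 =? m)%nat = false) as -> by (apply Nat.eqb_neq; lia).
  rewrite Bool.andb_false_r. reflexivity. Qed.

Lemma kill_pow2 n : (2 <= n)%nat -> Nat.iter (S n) Top (mono (2 ^ n)) = czero.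
Proof. intros Hn.
  assert (mono (2 ^ n) = Nat.iter (n - 2) Sh (mono 4)) as ->.
  { rewrite iterSh_mono. f_equal. replace n with ((n - 2) + 2)%nat at 1 by lia.
    rewrite Nat.pow_add_r. simpl. lia. }
  replace (S n) with (3 + (n - 2))%nat by lia.
  rewrite iterTop_Sh_gen by (apply mono_low; lia).
  simpl. rewrite Top_mono4, Top_zero, Top_zero. reflexivity. Qed.

Lemma iterTop_sub k f g : Nat.iter k Top (csub f g) = csub (Nat.iter k Top f) (Nat.iter k Top g).
Proof. rewrite !csub_eq, iterTop_add, iterTop_scal. reflexivity. Qed.

Lemma csub_self f : csub f f = czero.
Proof. apply functional_extensionality. intro n. unfold csub, czero. Cring. Qed.

Lemma mono_fin x : exists D, forall n, (D < n)%nat -> mono x n = RtoC 0.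
Proof. exists x. intros n Hn. unfold mono. assert ((n =? x)%nat = false) as -> by (apply Nat.eqb_neq; lia). reflexivity. Qed.

Lemma ex_next x : (3 <= x)%nat -> exists y, (x < y)%nat /\ good (csub (mono x) (mono y)).
Proof. intros Hx. destruct (decomp x) as [n [b [Hb ->]]]; [lia|].
  pose proof (odd_double b Hb) as Hb2.
  assert (Hpos : (1 <= 2 ^ n)%nat) by (apply Nat.le_succ_l; apply Nat.neq_0_lt_0; apply Nat.pow_nonzero; lia).
  destruct (Nat.eq_dec b 1) as [->|Hb1].
  -
    assert (2 <= n)%nat.
    { destruct n as [|[|n]]; simpl in Hx; lia. }
    exists (2 ^ (n + 2))%nat. split.
    + rewrite Nat.pow_add_r. simpl. lia.
    + split; [|split].
      * intros m Hm. unfold csub. rewrite !mono_low; try lia. Cring.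
        rewrite Nat.pow_add_r; simpl; lia.
      * exists (2 ^ (n + 2))%nat. intros m Hm. unfold csub, mono.
        assert ((m =? 2 ^ n * 1)%nat = false) as -> by (apply Nat.eqb_neq; rewrite Nat.pow_add_r in Hm; simpl in Hm; lia).
        assert ((m =? 2 ^ (n+2))%nat = false) as -> by (apply Nat.eqb_neq; lia). Cring.
      * exists (S (n + 2)). rewrite iterTop_sub. rewrite Nat.mul_1_r.
        rewrite (kill_mono _ (S n)); [| apply kill_pow2; lia | lia].
        rewrite kill_pow2 by lia. apply csub_self.
  - assert (3 <= b)%nat by lia.
    exists (2 ^ n * (3 * b + 1))%nat. split; [nia|].
    split; [|split].
    + intros m Hm. unfold csub. rewrite !mono_low; try nia. Cring.
    + exists (2 ^ n * (3 * b + 1))%nat. intros m Hm. unfold csub, mono.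
      assert ((m =? 2 ^ n * b)%nat = false) as -> by (apply Nat.eqb_neq; nia).
      assert ((m =? 2 ^ n * (3 * b + 1))%nat = false) as -> by (apply Nat.eqb_neq; lia). Cring.
    + exists (S n). rewrite iterTop_sub. rewrite <- !iterSh_mono.
      replace (S n) with (1 + n)%nat by lia.
      rewrite !iterTop_Sh_gen by (apply mono_low; lia). simpl.
      assert (Top (mono b) = Top (mono (3 * b + 1))) as ->.
      { apply functional_extensionality. intro m. rewrite !Top_mono.
        rewrite <- Tcol_odd_pair by auto.
        assert ((3 <=? b)%nat = true) as -> by (apply Nat.leb_le; lia).
        assert ((3 <=? 3 * b + 1)%nat = true) as -> by (apply Nat.leb_le; lia). reflexivity. }
      apply csub_self. Qed.

Definition nxt (x : nat) : nat :=
  match Compare_dec.le_lt_dec 3 x with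
  | left H => proj1_sig (constructive_indefinite_description _ (ex_next x H))
  | right _ => S x
  end.

Lemma nxt_spec x : (x < nxt x)%nat /\ ((3 <= x)%nat -> good (csub (mono x) (mono (nxt x)))).
Proof. unfold nxt. destruct (Compare_dec.le_lt_dec 3 x) as [H|H].
  - destruct (constructive_indefinite_description _ (ex_next x H)) as [y [H1 H2]]. simpl. auto.
  - split; [lia|]. intros; lia. Qed.

Definition ch (i x : nat) : nat := Nat.iter i nxt x.

Lemma ch_ge i x : (x <= ch i x)%nat.
Proof. induction i; simpl; [lia|]. pose proof (nxt_spec (ch i x)). unfold ch in *. lia. Qed.

Lemma ch_lt i j x : (i < j)%nat -> (ch i x < ch j x)%nat.
Proof. intros H. induction j; [lia|].
  destruct (Nat.eq_dec i j) as [->|Hne].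
  - unfold ch. simpl. apply nxt_spec.
  - assert (ch j x < ch (S j) x)%nat by (unfold ch; simpl; apply nxt_spec).
    specialize (IHj ltac:(lia)). lia. Qed.

Lemma ch_good i x : (3 <= x)%nat -> good (csub (mono x) (mono (ch i x))).
Proof. intros Hx. induction i.
  - simpl. rewrite csub_self. apply good_zero.
  - assert (csub (mono x) (mono (ch (S i) x)) =
            cadd (csub (mono x) (mono (ch i x))) (csub (mono (ch i x)) (mono (nxt (ch i x))))) as ->.
    { apply functional_extensionality. intro n. unfold csub, cadd, ch. simpl. Cring. }
    apply good_add; auto. apply nxt_spec. pose proof (ch_ge i x). lia. Qed.

Lemma sum_n_Cconst (c : C) N : (sum_n (fun _ => c) N : C) = Cmult (RtoC (INR (S N))) c.
Proof. induction N.
  - rewrite sum_O_C. simpl. Cring.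
  - rewrite sum_Sn_C, IHN. rewrite (S_INR (S N)), RtoC_plus. Cring. Qed.

Lemma sum_n_Cminus (u v : nat -> C) n :
  (sum_n (fun k => Cminus (u k) (v k)) n : C) = Cminus (sum_n u n) (sum_n v n).
Proof. induction n.
  - rewrite !sum_O_C. reflexivity.
  - rewrite !sum_Sn_C, IHn. Cring. Qed.

Definition avg (L x : nat) : coeffs :=
  csum (fun i => cscal (RtoC (/ INR L)) (mono (ch (S i) x))) (L - 1).
Definition aL (L x : nat) : coeffs := csub (mono x) (avg L x).

Lemma aL_good L x : (1 <= L)%nat -> (3 <= x)%nat -> good (aL L x).
Proof. intros HL Hx.
  assert (aL L x = cscal (RtoC (/ INR L)) (csum (fun i => csub (mono x) (mono (ch (S i) x))) (L - 1))) as ->.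
  { apply functional_extensionality. intro n. unfold aL, avg, csum, cscal, csub.
    rewrite <- sum_n_Cscal.
    assert (forall i, Cmult (RtoC (/ INR L)) (Cminus (mono x n) (mono (ch (S i) x) n)) =
      Cminus (Cmult (RtoC (/ INR L)) (mono x n)) (Cmult (RtoC (/ INR L)) (mono (ch (S i) x) n))) as E.
    { intro i. Cring. }
    rewrite (sum_n_ext _ _ _ E).
    rewrite sum_n_Cminus, sum_n_Cconst. replace (S (L - 1)) with L by lia.
    rewrite Cmult_assoc, <- RtoC_mult, Rinv_r, Cmult_1_l. reflexivity.
    apply not_0_INR. lia. }
  apply good_scal. apply good_csum. intros. apply ch_good; auto. Qed.

Lemma sum_Sn_R (u : nat -> R) n : (sum_n u (S n) : R) = sum_n u n + u (S n).
Proof. exact (sum_Sn u n). Qed.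
Lemma sum_O_R (u : nat -> R) : (sum_n u 0 : R) = u 0%nat.
Proof. exact (sum_O u). Qed.

Lemma is_series_lim a l : is_series a l <-> is_lim_seq (sum_n a) l.
Proof. split; intro H; exact H. Qed.

Lemma sum_n_R_nonneg (a : nat -> R) N : (forall n, 0 <= a n) -> 0 <= sum_n a N.
Proof. intros H. induction N. rewrite sum_O_R; auto. rewrite sum_Sn_R. specialize (H (S N)). lra. Qed.

Lemma sum_n_R_le (a b : nat -> R) N : (forall n, (n <= N)%nat -> a n <= b n) -> (sum_n a N : R) <= sum_n b N.
Proof. intros H. induction N. rewrite !sum_O_R; auto. rewrite !sum_Sn_R.
  specialize (IHN ltac:(intros; apply H; lia)). specialize (H (S N) ltac:(lia)). lra. Qed.

Lemma sum_n_R_mono (a : nat -> R) N M : (forall n, 0 <= a n) -> (N <= M)%nat -> (sum_n a N : R) <= sum_n a M.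
Proof. intros H HNM. induction HNM. lra. rewrite sum_Sn_R. specialize (H (S m)). lra. Qed.

Lemma sum_n_R_plus (a b : nat -> R) N : (sum_n (fun n => a n + b n) N : R) = sum_n a N + sum_n b N.
Proof. induction N. rewrite !sum_O_R; auto. rewrite !sum_Sn_R, IHN. lra. Qed.

Lemma sum_n_R_scal (c : R) (a : nat -> R) N : (sum_n (fun n => c * a n) N : R) = c * sum_n a N.
Proof. induction N. rewrite !sum_O_R; auto. rewrite !sum_Sn_R, IHN. lra. Qed.

Lemma sum_n_R_const (c : R) N : (sum_n (fun _ => c) N : R) = INR (S N) * c.
Proof. induction N. rewrite sum_O_R. simpl. lra. rewrite sum_Sn_R, IHN. rewrite (S_INR (S N)). lra. Qed.

Lemma ser_bound (a : nat -> R) B : (forall n, 0 <= a n) -> (forall N, sum_n a N <= B) ->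
  ex_series a /\ Series a <= B.
Proof. intros Ha HB.
  assert (Hinc : forall n, sum_n a n <= sum_n a (S n)) by (intro n; rewrite sum_Sn_R; specialize (Ha (S n)); lra).
  destruct (ex_finite_lim_seq_incr _ B Hinc HB) as [l Hl].
  assert (is_series a l) by exact Hl.
  split. exists l; auto.
  rewrite (is_series_unique _ _ H).
  assert (Rbar_le l B). { apply (is_lim_seq_le _ _ l B HB Hl). apply is_lim_seq_const. }
  simpl in H0. auto. Qed.

Lemma ser_ge_partial (a : nat -> R) N : (forall n, 0 <= a n) -> ex_series a -> sum_n a N <= Series a.
Proof. intros Ha He. apply Series_correct in He. apply is_series_lim in He.
  assert (He2 : is_lim_seq (fun N => (@sum_n R_AbelianMonoid a N)) (Series a)) by exact He.
  apply (is_lim_seq_incr_compare _ _ He2). intro n; rewrite sum_Sn_R; specialize (Ha (S n)); lra. Qed.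

Lemma ser_nonneg (a : nat -> R) : (forall n, 0 <= a n) -> ex_series a -> 0 <= Series a.
Proof. intros Ha He. pose proof (ser_ge_partial a 0 Ha He). rewrite sum_O_R in H. specialize (Ha 0%nat). lra. Qed.

Lemma ser_fin (a : nat -> R) D : (forall n, (D < n)%nat -> a n = 0) -> ex_series a /\ Series a = sum_n a D.
Proof. intros H.
  assert (is_series a (sum_n a D)).
  { assert (is_lim_seq (fun N => @sum_n R_AbelianMonoid a N) (sum_n a D)); [|exact H0].
    apply is_lim_seq_ext_loc with (fun _ => sum_n a D).
    - exists D. intros n Hn. induction Hn. reflexivity. rewrite sum_Sn_R, H by lia. rewrite <- IHHn. lra.
    - apply is_lim_seq_const. }
  split. exists (sum_n a D); auto. apply is_series_unique; auto. Qed.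

Lemma ser_le (a b : nat -> R) : (forall n, 0 <= a n <= b n) -> ex_series b -> ex_series a /\ Series a <= Series b.
Proof. intros H Hb. split.
  - apply (ex_series_le a b); auto. intro n. rewrite Rabs_pos_eq; apply H.
  - apply Series_le; auto. Qed.

Lemma ser_tail (a : nat -> R) eps : (forall n, 0 <= a n) -> ex_series a -> 0 < eps ->
  exists M, forall M', (M <= M')%nat -> Series (fun n => if (n <=? M')%nat then 0 else a n) < eps.
Proof. intros Ha He Heps.
  pose proof (Series_correct _ He) as Hc0.
  assert (Hc : is_lim_seq (fun N => @sum_n R_AbelianMonoid a N) (Series a)) by exact Hc0.
  apply is_lim_seq_spec in Hc. destruct (Hc (mkposreal (eps/2) ltac:(lra))) as [M HM]. simpl in HM.
  exists M. intros M' HM'.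
  assert (Hb : forall N, sum_n (fun n => if (n <=? M')%nat then 0 else a n) N <= Series a - sum_n a M').
  { intro N. assert (forall N, sum_n (fun n => if (n <=? M')%nat then 0 else a n) N + sum_n a M' <= sum_n a (max N M')).
    { clear N. induction N.
      - rewrite sum_O_R. simpl. lra.
      - rewrite sum_Sn_R. destruct (S N <=? M')%nat eqn:E.
        + apply Nat.leb_le in E. rewrite !Nat.max_r in * by lia. lra.
        + apply Nat.leb_gt in E. rewrite Nat.max_l by lia. rewrite Nat.max_l in IHN by lia.
          rewrite sum_Sn_R. lra. }
    specialize (H N). pose proof (ser_ge_partial a (max N M') Ha He). lra. }
  assert (Hnn : forall n, 0 <= (if (n <=? M')%nat then 0 else a n)) by (intro n; destruct (n <=? M')%nat; [lra|auto]).
  destruct (ser_bound _ _ Hnn Hb) as [_ H1].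
  specialize (HM M' HM'). apply Rabs_def2 in HM. lra. Qed.

Definition wpos (w : nat -> R) := forall n, 0 < w n.
Definition L2 (w : nat -> R) (f : coeffs) := ex_series (wsum w f).
Definition N2 (w : nat -> R) (f : coeffs) := Series (wsum w f).

Lemma wsum_nonneg w f n : wpos w -> 0 <= wsum w f n.
Proof. intros Hw. unfold wsum. apply Rdiv_le_0_compat. apply pow2_ge_0. apply Hw. Qed.

Lemma N2_nonneg w f : wpos w -> L2 w f -> 0 <= N2 w f.
Proof. intros. apply ser_nonneg; auto. intro; apply wsum_nonneg; auto. Qed.

Lemma sq_sum_le (x y : R) : 0 <= x -> 0 <= y -> (x + y) ^ 2 <= 2 * x ^ 2 + 2 * y ^ 2.
Proof. intros. assert (0 <= (x - y) ^ 2) by apply pow2_ge_0. simpl in *. nra. Qed.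

Lemma Cmod_sub_le a b : Cmod (Cminus a b) <= Cmod a + Cmod b.
Proof. unfold Cminus. eapply Rle_trans. apply Cmod_triangle. rewrite Cmod_opp. lra. Qed.

Lemma wsum_add_le w f g n : wpos w -> wsum w (cadd f g) n <= 2 * wsum w f n + 2 * wsum w g n.
Proof. intros Hw. unfold wsum, cadd. specialize (Hw n).
  assert (Cmod (Cplus (f n) (g n)) ^ 2 <= 2 * Cmod (f n) ^ 2 + 2 * Cmod (g n) ^ 2).
  { eapply Rle_trans; [|apply sq_sum_le; apply Cmod_ge_0].
    apply pow_incr. split. apply Cmod_ge_0. apply Cmod_triangle. }
  unfold Rdiv. rewrite <- !Rmult_assoc, <- Rmult_plus_distr_r.
  apply Rmult_le_compat_r; auto. left; apply Rinv_0_lt_compat; auto. Qed.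

Lemma wsum_sub_le w f g n : wpos w -> wsum w (csub f g) n <= 2 * wsum w f n + 2 * wsum w g n.
Proof. intros Hw. unfold wsum, csub. specialize (Hw n).
  assert (Cmod (Cminus (f n) (g n)) ^ 2 <= 2 * Cmod (f n) ^ 2 + 2 * Cmod (g n) ^ 2).
  { eapply Rle_trans; [|apply sq_sum_le; apply Cmod_ge_0].
    apply pow_incr. split. apply Cmod_ge_0. apply Cmod_sub_le. }
  unfold Rdiv. rewrite <- !Rmult_assoc, <- Rmult_plus_distr_r.
  apply Rmult_le_compat_r; auto. left; apply Rinv_0_lt_compat; auto. Qed.

Lemma N2_comb w f g h : wpos w -> L2 w f -> L2 w g ->
  (forall n, wsum w h n <= 2 * wsum w f n + 2 * wsum w g n) ->
  L2 w h /\ N2 w h <= 2 * N2 w f + 2 * N2 w g.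
Proof. intros Hw Hf Hg H.
  assert (ex_series (fun n => 2 * wsum w f n + 2 * wsum w g n)).
  { apply (ex_series_plus (V := R_NormedModule)); apply (ex_series_scal_l (V := R_NormedModule) 2); auto. }
  destruct (ser_le (wsum w h) _ (fun n => conj (wsum_nonneg w h n Hw) (H n)) H0) as [H1 H2].
  split; auto. unfold N2. eapply Rle_trans; [apply H2|].
  rewrite Series_plus, !Series_scal_l. lra.
  apply (ex_series_scal_l (V := R_NormedModule) 2); auto.
  apply (ex_series_scal_l (V := R_NormedModule) 2); auto. Qed.

Lemma N2_add w f g : wpos w -> L2 w f -> L2 w g -> L2 w (cadd f g) /\ N2 w (cadd f g) <= 2 * N2 w f + 2 * N2 w g.
Proof. intros. apply N2_comb; auto. intro; apply wsum_add_le; auto. Qed.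

Lemma N2_sub w f g : wpos w -> L2 w f -> L2 w g -> L2 w (csub f g) /\ N2 w (csub f g) <= 2 * N2 w f + 2 * N2 w g.
Proof. intros. apply N2_comb; auto. intro; apply wsum_sub_le; auto. Qed.

Lemma wsum_scal w a f n : wsum w (cscal a f) n = Cmod a ^ 2 * wsum w f n.
Proof. unfold wsum, cscal. rewrite Cmod_mult. unfold Rdiv. ring. Qed.

Lemma N2_scal w a f : L2 w f -> L2 w (cscal a f) /\ N2 w (cscal a f) = Cmod a ^ 2 * N2 w f.
Proof. intros H. unfold L2, N2. rewrite (Series_ext _ _ (wsum_scal w a f)). split.
  - eapply ex_series_ext. intro n. symmetry. apply wsum_scal.
    apply (ex_series_scal_l (V := R_NormedModule)); auto.
  - apply Series_scal_l. Qed.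

Lemma N2_fin w f D : (forall n, (D < n)%nat -> f n = RtoC 0) -> L2 w f /\ N2 w f = sum_n (wsum w f) D.
Proof. intros H. apply ser_fin. intros n Hn. unfold wsum. rewrite H by auto. rewrite Cmod_0. unfold Rdiv. ring. Qed.

Lemma N2_mono w y : L2 w (mono y) /\ N2 w (mono y) = / w y.
Proof. destruct (N2_fin w (mono y) y) as [H1 H2].
  { intros n Hn. unfold mono. assert ((n =? y)%nat = false) as -> by (apply Nat.eqb_neq; lia). reflexivity. }
  split; auto. rewrite H2.
  assert (forall n, wsum w (mono y) n = if (n =? y)%nat then / w y else 0).
  { intro n. unfold wsum, mono. destruct (n =? y)%nat eqn:E.
    - apply Nat.eqb_eq in E. subst. rewrite Cmod_1. unfold Rdiv. ring.
    - rewrite Cmod_0. unfold Rdiv. ring. }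
  rewrite (sum_n_ext _ _ _ H).
  clear. induction y.
  - rewrite sum_O_R. reflexivity.
  - rewrite sum_Sn_R, Nat.eqb_refl.
    rewrite (sum_n_ext_loc _ (fun _ => 0)).
    + rewrite sum_n_R_const. lra.
    + intros n Hn. assert ((n =? S y)%nat = false) as -> by (apply Nat.eqb_neq; lia). reflexivity. Qed.


Lemma sum_n_R_scal_r (c : R) (a : nat -> R) N : (sum_n (fun n => a n * c) N : R) = sum_n a N * c.
Proof. induction N. rewrite !sum_O_R; auto. rewrite !sum_Sn_R, IHN. lra. Qed.

Lemma Cmod_sum_le (u : nat -> C) K : Cmod (sum_n u K) <= sum_n (fun i => Cmod (u i)) K.
Proof. induction K.
  - rewrite sum_O_C, sum_O_R. lra.
  - rewrite sum_Sn_C, sum_Sn_R. eapply Rle_trans. apply Cmod_triangle. lra. Qed.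

Lemma cs_aux (s : nat -> R) (t : R) K :
  2 * t * sum_n s K <= sum_n (fun i => s i ^ 2) K + INR (S K) * t ^ 2.
Proof. rewrite <- sum_n_R_scal, <- sum_n_R_const, <- sum_n_R_plus.
  apply sum_n_R_le. intros n _. assert (0 <= (s n - t) ^ 2) by apply pow2_ge_0. simpl in *. nra. Qed.

Lemma sq_sum_CS (t : nat -> R) K : (sum_n t K) ^ 2 <= INR (S K) * sum_n (fun i => t i ^ 2) K.
Proof. induction K.
  - rewrite !sum_O_R. simpl. lra.
  - rewrite !sum_Sn_R. pose proof (cs_aux t (t (S K)) K).
    rewrite (S_INR (S K)).
    assert (0 <= sum_n (fun i => t i ^ 2) K) by (apply sum_n_R_nonneg; intro; apply pow2_ge_0).
    assert (0 <= INR (S K)) by apply pos_INR.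
    simpl in *. nra. Qed.

Lemma ser_sum (G : nat -> nat -> R) K : (forall i, (i <= K)%nat -> ex_series (G i)) ->
  ex_series (fun n => sum_n (fun i => G i n) K) /\ Series (fun n => sum_n (fun i => G i n) K) = sum_n (fun i => Series (G i)) K.
Proof. induction K; intros H.
  - split.
    + apply (ex_series_ext (G 0%nat)). intro n. rewrite sum_O_R. reflexivity. apply H; lia.
    + rewrite sum_O_R. apply Series_ext. intro n. apply sum_O_R.
  - destruct IHK as [H1 H2]. intros; apply H; lia.
    assert (E : forall n, sum_n (fun i => G i n) (S K) = sum_n (fun i => G i n) K + G (S K) n) by (intro; apply sum_Sn_R).
    split.
    + apply (ex_series_ext (fun n => sum_n (fun i => G i n) K + G (S K) n)).
      intro n. symmetry. apply E.
      apply (ex_series_plus (V := R_NormedModule)); auto.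
    + rewrite (Series_ext _ _ E), Series_plus, H2, sum_Sn_R; auto. Qed.

Lemma N2_csum w F K : wpos w -> (forall i, (i <= K)%nat -> L2 w (F i)) ->
  L2 w (csum F K) /\ N2 w (csum F K) <= INR (S K) * sum_n (fun i => N2 w (F i)) K.
Proof. intros Hw HF.
  assert (Hp : forall n, wsum w (csum F K) n <= INR (S K) * sum_n (fun i => wsum w (F i) n) K).
  { intro n. unfold wsum, csum. unfold Rdiv. rewrite sum_n_R_scal_r.
    rewrite <- Rmult_assoc. apply Rmult_le_compat_r. left; apply Rinv_0_lt_compat, Hw.
    eapply Rle_trans. apply pow_incr. split. apply Cmod_ge_0. apply Cmod_sum_le.
    apply sq_sum_CS. }
  destruct (ser_sum (fun i n => wsum w (F i) n) K) as [H1 H2]. intros; apply HF; auto.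
  assert (ex_series (fun n => INR (S K) * sum_n (fun i => wsum w (F i) n) K)).
  { apply (ex_series_scal_l (V := R_NormedModule)); auto. }
  destruct (ser_le (wsum w (csum F K)) _ (fun n => conj (wsum_nonneg w _ n Hw) (Hp n)) H) as [H3 H4].
  split; auto. unfold N2. eapply Rle_trans. apply H4. rewrite Series_scal_l, H2. right; reflexivity. Qed.

Lemma Cmod_sum_disj (u : nat -> C) K :
  (forall i j, (i <= K)%nat -> (j <= K)%nat -> i <> j -> u i = RtoC 0 \/ u j = RtoC 0) ->
  Cmod (sum_n u K) ^ 2 = sum_n (fun i => Cmod (u i) ^ 2) K.
Proof. induction K; intros H.
  - rewrite sum_O_C, sum_O_R. reflexivity.
  - rewrite sum_Sn_C, sum_Sn_R.
    destruct (Ceq_dec (u (S K)) (RtoC 0)) as [E|E].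
    + rewrite E, Cplus_0_r, Cmod_0, IHK. Rring. intros; apply H; lia.
    + assert (Z : forall i, (i <= K)%nat -> u i = RtoC 0).
      { intros i Hi. destruct (H i (S K)) as [A|A]; auto; try lia. congruence. }
      rewrite sum_n_C0 by auto. rewrite Cplus_0_l.
      rewrite (sum_n_ext_loc _ (fun _ => 0)). rewrite sum_n_R_const. Rring.
      intros n Hn. rewrite Z by auto. rewrite Cmod_0. Rring. Qed.

Definition disj (u : nat -> coeffs) := forall i j m, i <> j -> u i m = RtoC 0 \/ u j m = RtoC 0.

Lemma N2_csum_disj w F K : wpos w -> disj F -> (forall i, (i <= K)%nat -> L2 w (F i)) ->
  L2 w (csum F K) /\ N2 w (csum F K) = sum_n (fun i => N2 w (F i)) K.
Proof. intros Hw Hd HF.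
  assert (Hp : forall n, wsum w (csum F K) n = sum_n (fun i => wsum w (F i) n) K).
  { intro n. unfold wsum, csum. unfold Rdiv. rewrite sum_n_R_scal_r, Cmod_sum_disj. Rring.
    intros; apply Hd; auto. }
  destruct (ser_sum (fun i n => wsum w (F i) n) K) as [H1 H2]. intros; apply HF; auto.
  split.
  - unfold L2. eapply ex_series_ext. intro n. symmetry. apply Hp. auto.
  - unfold N2. rewrite (Series_ext _ _ Hp). auto. Qed.

Lemma sum_Sn_l_C (u : nat -> C) n : (sum_n u (S n) : C) = Cplus (u 0%nat) (sum_n (fun k => u (S k)) n).
Proof. induction n.
  - rewrite sum_Sn_C, !sum_O_C. reflexivity.
  - rewrite sum_Sn_C, IHn, (sum_Sn_C (fun k => u (S k))). Cring. Qed.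

Definition bsum (u : nat -> coeffs) : coeffs := fun m => sum_n (fun k => u k m) m.
Definition tri (u : nat -> coeffs) := forall k m, (m < k)%nat -> u k m = RtoC 0.

Lemma bsum_ext_sum u m M : tri u -> (m <= M)%nat -> bsum u m = sum_n (fun k => u k m) M.
Proof. intros Ht H. unfold bsum. induction H. reflexivity.
  rewrite sum_Sn_C, <- IHle, Ht by lia. Cring. Qed.

Lemma bsum_shift u : tri u -> bsum u = cadd (u 0%nat) (bsum (fun k => u (S k))).
Proof. intros Ht. apply functional_extensionality. intro m. unfold cadd.
  destruct m.
  - unfold bsum. rewrite !sum_O_C. rewrite (Ht 1%nat 0%nat) by lia. Cring.
  - unfold bsum. rewrite sum_Sn_l_C. f_equal.
    rewrite sum_Sn_C. rewrite (Ht (S (S m)) (S m)) by lia. Cring. Qed.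

Lemma tri_Sh u : tri u -> tri (fun k => Sh (u k)).
Proof. intros Ht k m Hm. unfold Sh. destruct (Nat.even m) eqn:E; [|reflexivity].
  apply Ht. pose proof (even_double m E). lia. Qed.

Lemma bsum_Sh u : tri u -> Sh (bsum u) = bsum (fun k => Sh (u k)).
Proof. intros Ht. apply functional_extensionality. intro m. unfold Sh at 1.
  destruct (Nat.even m) eqn:E.
  - pose proof (even_double m E).
    rewrite (bsum_ext_sum (fun k => Sh (u k)) m m) by (auto using tri_Sh).
    rewrite (bsum_ext_sum u (m / 2) m) by (auto; lia).
    apply sum_n_ext. intro k. unfold Sh. rewrite E. reflexivity.
  - unfold bsum. symmetry. apply sum_n_C0. intros j _. unfold Sh. rewrite E. reflexivity. Qed.

Lemma tri_iterSh d u : tri u -> tri (fun k => Nat.iter d Sh (u k)).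
Proof. intros Ht. induction d. simpl. auto. simpl. apply (tri_Sh _ IHd). Qed.

Lemma bsum_iterSh d u : tri u -> Nat.iter d Sh (bsum u) = bsum (fun k => Nat.iter d Sh (u k)).
Proof. intros Ht. induction d. reflexivity.
  simpl. rewrite IHd. apply bsum_Sh. apply tri_iterSh; auto. Qed.

Lemma bsum_low u : (forall k, low0 (u k)) -> low0 (bsum u).
Proof. intros H n Hn. unfold bsum. apply sum_n_C0. intros. apply H; auto. Qed.

Lemma bsum_norm w u : wpos w -> tri u -> disj u -> (forall k, L2 w (u k)) ->
  ex_series (fun k => N2 w (u k)) ->
  L2 w (bsum u) /\ N2 w (bsum u) <= Series (fun k => N2 w (u k)).
Proof. intros Hw Ht Hd HL He.
  apply ser_bound. intro; apply wsum_nonneg; auto.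
  intro M.
  assert (E : sum_n (wsum w (bsum u)) M = sum_n (wsum w (csum u M)) M).
  { apply sum_n_ext_loc. intros n Hn. unfold wsum. rewrite (bsum_ext_sum u n M) by auto. reflexivity. }
  rewrite E.
  destruct (N2_csum_disj w u M Hw Hd) as [H1 H2]. intros; auto.
  eapply Rle_trans. apply ser_ge_partial. intro; apply wsum_nonneg; auto. exact H1.
  fold (N2 w (csum u M)). rewrite H2.
  apply ser_ge_partial; auto. intro k. apply N2_nonneg; auto. Qed.

Lemma bsum_coef u m : Cmod (bsum u m) <= sum_n (fun k => Cmod (u k m)) m.
Proof. apply Cmod_sum_le. Qed.

Definition supp_in (f : coeffs) (lo hi : nat) := forall m, ((m < lo)%nat \/ (hi < m)%nat) -> f m = RtoC 0.

Lemma Sh_supp f lo hi : supp_in f lo hi -> supp_in (Sh f) (2 * lo) (2 * hi).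
Proof. intros H m Hm. unfold Sh. destruct (Nat.even m) eqn:E; [|reflexivity].
  pose proof (even_double m E). apply H. lia. Qed.

Lemma iterSh_supp n f lo hi : supp_in f lo hi -> supp_in (Nat.iter n Sh f) (2 ^ n * lo) (2 ^ n * hi).
Proof. intros H. induction n.
  - simpl Nat.iter. rewrite Nat.pow_0_r, !Nat.mul_1_l. auto.
  - rewrite Nat.iter_succ. rewrite Nat.pow_succ_r'.
    replace (2 * 2 ^ n * lo)%nat with (2 * (2 ^ n * lo))%nat by lia.
    replace (2 * 2 ^ n * hi)%nat with (2 * (2 ^ n * hi))%nat by lia.
    apply Sh_supp; auto. Qed.

Lemma iterSh_coef n f B : (forall m, Cmod (f m) <= B) -> 0 <= B -> forall m, Cmod (Nat.iter n Sh f m) <= B.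
Proof. intros H HB. induction n; simpl; auto. intro m. unfold Sh. destruct (Nat.even m); auto.
  rewrite Cmod_0; auto. Qed.

Lemma sum_Sh_reindex w f M : sum_n (wsum w (Sh f)) (2 * M + 1) = sum_n (wsum (fun x => w (2 * x)%nat) f) M.
Proof. induction M.
  - simpl. rewrite sum_Sn_R, !sum_O_R. unfold wsum, Sh. simpl. rewrite Cmod_0. Rring.
  - replace (2 * S M + 1)%nat with (S (S (2 * M + 1))) by lia.
    rewrite !sum_Sn_R, IHM. unfold wsum, Sh.
    replace (S (2 * M + 1)) with (2 * S M)%nat by lia.
    rewrite even_2k, div2_double.
    replace (S (2 * S M)) with (2 * S M + 1)%nat by lia.
    assert (Nat.even (2 * S M + 1) = false) as ->.
    { rewrite Nat.even_add, even_2k. reflexivity. }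
    rewrite Cmod_0. Rring. Qed.

Lemma N2_ext_w w1 w2 f : (forall n, w1 n = w2 n) -> N2 w1 f = N2 w2 f.
Proof. intros H. unfold N2. apply Series_ext. intro n. unfold wsum. rewrite H. reflexivity. Qed.

Lemma N2_Sh w f D : (forall n, (D < n)%nat -> f n = RtoC 0) ->
  N2 w (Sh f) = N2 (fun x => w (2 * x)%nat) f.
Proof. intros H.
  destruct (N2_fin (fun x => w (2 * x)%nat) f D H) as [_ E2]. rewrite E2.
  destruct (N2_fin w (Sh f) (2 * D + 1)) as [_ E1].
  { intros n Hn. unfold Sh. destruct (Nat.even n) eqn:E; [|reflexivity]. pose proof (even_double n E). apply H. lia. }
  rewrite E1. apply sum_Sh_reindex. Qed.

Lemma N2_iterSh n w f D : (forall m, (D < m)%nat -> f m = RtoC 0) ->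
  N2 w (Nat.iter n Sh f) = N2 (fun x => w (2 ^ n * x)%nat) f.
Proof. revert w f D. induction n; intros w f D H.
  - simpl. apply N2_ext_w. intro. f_equal. lia.
  - rewrite Nat.iter_succ_r. rewrite (IHn w (Sh f) (2 * D + 1)%nat).
    + rewrite (N2_Sh _ f D H). apply N2_ext_w. intro x. f_equal. simpl. lia.
    + intros m Hm. unfold Sh. destruct (Nat.even m) eqn:E; [|reflexivity]. pose proof (even_double m E). apply H. lia. Qed.

Lemma L2_fin w f D : (forall m, (D < m)%nat -> f m = RtoC 0) -> L2 w f.
Proof. intros H. apply (N2_fin w f D H). Qed.

Definition wlow (w : nat -> R) (m0 : R) := 0 < m0 /\ forall n, m0 <= w n.

Lemma wlow_pos w m0 : wlow w m0 -> wpos w.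
Proof. intros [H1 H2] n. specialize (H2 n). lra. Qed.

Lemma mono_disj_scal a (pts : nat -> nat) : (forall i j, i <> j -> pts i <> pts j) ->
  disj (fun i => cscal a (mono (pts i))).
Proof. intros Hinj i j m Hij. unfold cscal, mono.
  destruct (m =? pts i)%nat eqn:E1.
  - right. apply Nat.eqb_eq in E1. assert ((m =? pts j)%nat = false) as ->.
    { apply Nat.eqb_neq. intro. apply (Hinj i j Hij). congruence. }
    Cring.
  - left. Cring. Qed.

Lemma ch_inj x : forall i j, i <> j -> ch i x <> ch j x.
Proof. intros i j H. destruct (Nat.lt_gt_cases i j) as [[A|A] _]; auto.
  - pose proof (ch_lt i j x A). lia.
  - pose proof (ch_lt j i x A). lia. Qed.

Lemma N2_avg w m0 L x : wlow w m0 -> (1 <= L)%nat ->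
  L2 w (avg L x) /\ N2 w (avg L x) <= / (INR L * m0).
Proof. intros Hw HL. pose proof (wlow_pos _ _ Hw) as Hp. destruct Hw as [Hm0 Hwm].
  assert (Hd : disj (fun i => cscal (RtoC (/ INR L)) (mono (ch (S i) x)))).
  { apply mono_disj_scal. intros i j Hij. apply ch_inj. lia. }
  unfold avg.
  destruct (N2_csum_disj w _ (L - 1) Hp Hd) as [H1 H2].
  { intros i _. apply N2_scal. apply N2_mono. }
  split; auto. rewrite H2.
  assert (HLpos : 0 < INR L) by (apply lt_0_INR; lia).
  eapply Rle_trans. apply (sum_n_R_le _ (fun _ => / (INR L) ^ 2 * / m0)).
  - intros i _. destruct (N2_scal w (RtoC (/ INR L)) (mono (ch (S i) x))) as [_ E]. apply N2_mono.
    rewrite E. destruct (N2_mono w (ch (S i) x)) as [_ E2]. rewrite E2.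
    rewrite Cmod_R, Rabs_pos_eq by (left; apply Rinv_0_lt_compat; auto).
    rewrite <- Rinv_pow by lra. apply Rmult_le_compat_l. left. apply Rinv_0_lt_compat. apply pow_lt; auto.
    apply Rinv_le_contravar; auto.
  - rewrite sum_n_R_const. replace (S (L - 1)) with L by lia.
    right. field. split; lra. Qed.

Lemma L2_aL w m0 L x : wlow w m0 -> (1 <= L)%nat -> L2 w (aL L x) /\ N2 w (aL L x) <= 4 / m0.
Proof. intros Hw HL. pose proof (wlow_pos _ _ Hw) as Hp.
  destruct (N2_avg w m0 L x Hw HL) as [A1 A2]. destruct (N2_mono w x) as [M1 M2].
  destruct (N2_sub w (mono x) (avg L x) Hp M1 A1) as [S1 S2].
  split; auto. unfold aL. eapply Rle_trans. apply S2. rewrite M2.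
  destruct Hw as [Hm0 Hwm]. specialize (Hwm x).
  assert (/ w x <= / m0) by (apply Rinv_le_contravar; auto).
  assert (/ (INR L * m0) <= / m0).
  { apply Rinv_le_contravar; auto. assert (1 <= INR L) by (apply (le_INR 1); lia). nra. }
  unfold Rdiv. lra. Qed.

Definition cf (h : nat -> C) (x : nat) : C := if (3 <=? x)%nat then h x else RtoC 0.
Definition Pm (M L : nat) (h : nat -> C) : coeffs := csum (fun x => cscal (cf h x) (aL L x)) M.

Lemma cscal0 f : cscal (RtoC 0) f = czero.
Proof. apply functional_extensionality. intro n. unfold cscal, czero. Cring. Qed.

Lemma Pm_good M L h : (1 <= L)%nat -> good (Pm M L h).
Proof. intros HL. apply good_csum. intros x _. unfold cf. destruct (3 <=? x)%nat eqn:E.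
  - apply good_scal. apply aL_good; auto. apply Nat.leb_le; auto.
  - rewrite cscal0. apply good_zero. Qed.

Definition trunc (M : nat) (h : nat -> C) : coeffs := csum (fun x => cscal (cf h x) (mono x)) M.

Lemma trunc_val M h n : trunc M h n = if (n <=? M)%nat then cf h n else RtoC 0.
Proof. unfold trunc, csum, cscal. destruct (n <=? M)%nat eqn:E.
  - apply Nat.leb_le in E. rewrite (sum_n_single _ _ n E).
    + unfold mono. rewrite Nat.eqb_refl. Cring.
    + intros j _ Hj. unfold mono. assert ((n =? j)%nat = false) as -> by (apply Nat.eqb_neq; lia). Cring.
  - apply Nat.leb_gt in E. apply sum_n_C0. intros j Hj. unfold mono.
    assert ((n =? j)%nat = false) as -> by (apply Nat.eqb_neq; lia). Cring. Qed.

Lemma trunc_sub_Pm M L h : csub (trunc M h) (Pm M L h) = csum (fun x => cscal (cf h x) (avg L x)) M.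
Proof. apply functional_extensionality. intro n. unfold csub, trunc, Pm, csum.
  rewrite <- sum_n_Cminus. apply sum_n_ext. intro x. unfold cscal, aL, csub. Cring. Qed.

Lemma Pm_sub M L h h' : csub (Pm M L h) (Pm M L h') = csum (fun x => cscal (Cminus (cf h x) (cf h' x)) (aL L x)) M.
Proof. apply functional_extensionality. intro n. unfold csub, Pm, csum.
  rewrite <- sum_n_Cminus. apply sum_n_ext. intro x. unfold cscal. Cring. Qed.

Lemma cadd_sub3 f g h : csub f h = cadd (csub f g) (csub g h).
Proof. apply functional_extensionality. intro n. unfold csub, cadd. Cring. Qed.

Lemma csub_trunc_wsum w M g n : low0 g -> wsum w (csub g (trunc M g)) n = if (n <=? M)%nat then 0 else wsum w g n.
Proof. intros Hg. unfold wsum, csub. rewrite trunc_val. unfold cf.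
  destruct (n <=? M)%nat; destruct (3 <=? n)%nat eqn:E.
  - replace (Cminus (g n) (g n)) with (RtoC 0) by Cring. rewrite Cmod_0. unfold Rdiv. ring.
  - apply Nat.leb_gt in E. rewrite Hg by auto. replace (Cminus (RtoC 0) (RtoC 0)) with (RtoC 0) by Cring. rewrite Cmod_0. unfold Rdiv. ring.
  - replace (Cminus (g n) (RtoC 0)) with (g n) by Cring. reflexivity.
  - replace (Cminus (g n) (RtoC 0)) with (g n) by Cring. reflexivity. Qed.

Lemma trunc_close w M0 g eps : wpos w -> low0 g -> L2 w g -> 0 < eps ->
  exists M, (M0 <= M)%nat /\ L2 w (csub g (trunc M g)) /\ N2 w (csub g (trunc M g)) < eps.
Proof. intros Hw Hg HL Heps.
  destruct (ser_tail (wsum w g) eps (fun n => wsum_nonneg w g n Hw) HL Heps) as [M HM].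
  exists (max M M0). split; [lia|].
  assert (E : forall n, wsum w (csub g (trunc (max M M0) g)) n = (if (n <=? max M M0)%nat then 0 else wsum w g n))
    by (intro; apply csub_trunc_wsum; auto).
  split.
  - unfold L2. apply (ex_series_ext _ _ (fun n => eq_sym (E n))).
    destruct (ser_le (fun n => if (n <=? max M M0)%nat then 0 else wsum w g n) (wsum w g)) as [A _]; auto.
    intro n. destruct (n <=? max M M0)%nat; split; try lra; apply wsum_nonneg; auto.
  - unfold N2. rewrite (Series_ext _ _ E). apply HM. lia. Qed.

Lemma sumsq_cf_nonneg h M : 0 <= sum_n (fun x => Cmod (cf h x) ^ 2) M.
Proof. apply sum_n_R_nonneg. intro; apply pow2_ge_0. Qed.

Lemma N2_trunc_Pm w m0 M L h : wlow w m0 -> (1 <= L)%nat ->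
  L2 w (csub (trunc M h) (Pm M L h)) /\
  N2 w (csub (trunc M h) (Pm M L h)) <= INR (S M) * sum_n (fun x => Cmod (cf h x) ^ 2) M * / (INR L * m0).
Proof. intros Hw HL. pose proof (wlow_pos _ _ Hw) as Hp. rewrite trunc_sub_Pm.
  destruct (N2_csum w (fun x => cscal (cf h x) (avg L x)) M Hp) as [H1 H2].
  { intros x _. apply N2_scal. apply (N2_avg w m0 L x Hw HL). }
  split; auto. eapply Rle_trans. apply H2. rewrite Rmult_assoc. apply Rmult_le_compat_l. apply pos_INR.
  rewrite <- sum_n_R_scal_r. apply sum_n_R_le. intros x _.
  destruct (N2_scal w (cf h x) (avg L x)) as [_ E]. apply (N2_avg w m0 L x Hw HL). rewrite E.
  apply Rmult_le_compat_l. apply pow2_ge_0. apply (N2_avg w m0 L x Hw HL). Qed.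

Lemma N2_Pm_sub w m0 M L h h' : wlow w m0 -> (1 <= L)%nat ->
  L2 w (csub (Pm M L h) (Pm M L h')) /\
  N2 w (csub (Pm M L h) (Pm M L h')) <= INR (S M) * sum_n (fun x => Cmod (Cminus (cf h x) (cf h' x)) ^ 2) M * (4 / m0).
Proof. intros Hw HL. pose proof (wlow_pos _ _ Hw) as Hp. rewrite Pm_sub.
  destruct (N2_csum w (fun x => cscal (Cminus (cf h x) (cf h' x)) (aL L x)) M Hp) as [H1 H2].
  { intros x _. apply N2_scal. apply (L2_aL w m0 L x Hw HL). }
  split; auto. eapply Rle_trans. apply H2. rewrite Rmult_assoc. apply Rmult_le_compat_l. apply pos_INR.
  rewrite <- sum_n_R_scal_r. apply sum_n_R_le. intros x _.
  destruct (N2_scal w (Cminus (cf h x) (cf h' x)) (aL L x)) as [_ E]. apply (L2_aL w m0 L x Hw HL). rewrite E.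
  apply Rmult_le_compat_l. apply pow2_ge_0. apply (L2_aL w m0 L x Hw HL). Qed.

Lemma nat_large r : exists N : nat, r < INR N.
Proof. destruct (archimed r) as [H1 _]. exists (Z.to_nat (up r)).
  destruct (Z.le_gt_cases 0 (up r)).
  - rewrite INR_IZR_INZ, Z2Nat.id; auto.
  - apply IZR_lt in H. pose proof (pos_INR (Z.to_nat (up r))). lra. Qed.

Lemma arith_aux X a e m : 0 <= X -> 0 < a -> 0 < e -> 0 < m -> X * 4 / (e * m) < a -> X * / (a * m) < e / 4.
Proof. intros HX Ha He Hm H.
  assert (H1 : X * 4 < a * (e * m)).
  { apply (Rmult_lt_compat_r (e * m)) in H; [|nra]. unfold Rdiv in H.
    rewrite Rmult_assoc, Rinv_l in H by nra. lra. }
  apply (Rmult_lt_reg_r (a * m)). nra. rewrite Rmult_assoc, Rinv_l by nra. nra. Qed.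

Lemma dense_good w m0 g eps : wlow w m0 -> low0 g -> L2 w g -> 0 < eps ->
  exists p, good p /\ L2 w p /\ N2 w (csub g p) < eps.
Proof. intros Hw Hg HL Heps. pose proof (wlow_pos _ _ Hw) as Hp. pose proof Hw as [Hm0 _].
  destruct (trunc_close w 0 g (eps / 4) Hp Hg HL ltac:(lra)) as [M [_ [T1 T2]]].
  set (G := sum_n (fun x => Cmod (cf g x) ^ 2) M).
  assert (HG : 0 <= G) by apply sumsq_cf_nonneg.
  destruct (nat_large (INR (S M) * G * 4 / (eps * m0))) as [L0 HL0].
  set (L := S L0).
  assert (HLr : INR (S M) * G * 4 / (eps * m0) < INR L) by (unfold L; rewrite (S_INR L0); lra).
  assert (HLpos : 0 < INR L) by (apply lt_0_INR; unfold L; lia).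
  destruct (N2_trunc_Pm w m0 M L g Hw ltac:(unfold L; lia)) as [Q1 Q2].
  exists (Pm M L g). split; [apply Pm_good; unfold L; lia|].
  assert (HLt : L2 w (trunc M g)).
  { destruct (N2_csum w (fun x => cscal (cf g x) (mono x)) M Hp) as [A _]; auto.
    intros x _. apply N2_scal. apply N2_mono. }
  assert (HLP : L2 w (Pm M L g)).
  { destruct (N2_csum w (fun x => cscal (cf g x) (aL L x)) M Hp) as [A _]; auto.
    intros x _. apply N2_scal. apply (L2_aL w m0 L x Hw). unfold L; lia. }
  split; auto.
  rewrite (cadd_sub3 g (trunc M g) (Pm M L g)).
  destruct (N2_add w _ _ Hp T1 Q1) as [_ A].
  eapply Rle_lt_trans. apply A.
  assert (INR (S M) * G * / (INR L * m0) < eps / 4).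
  { apply arith_aux; auto. apply Rmult_le_pos; auto. apply pos_INR. }
  unfold G in H. lra. Qed.

Fixpoint proj (x s : nat) : nat :=
  match x with
  | O => fst (Cantor.of_nat s)
  | S x' => proj x' (snd (Cantor.of_nat s))
  end.

Lemma proj_surj (h : nat -> nat) M : exists s, forall x, (x <= M)%nat -> proj x s = h x.
Proof. revert h. induction M; intros h.
  - exists (Cantor.to_nat (h 0%nat, 0%nat)). intros x Hx. assert (x = 0%nat) by lia. subst.
    cbn [proj]. rewrite Cantor.cancel_of_to. reflexivity.
  - destruct (IHM (fun x => h (S x))) as [s Hs].
    exists (Cantor.to_nat (h 0%nat, s)). intros x Hx. destruct x; cbn [proj]; rewrite Cantor.cancel_of_to; cbn [fst snd]; auto.
    apply Hs. lia. Qed.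

Definition zr (n : nat) : R := INR (fst (Cantor.of_nat n)) - INR (snd (Cantor.of_nat n)).

Definition qc (n : nat) : C :=
  let a := fst (Cantor.of_nat n) in
  let r := snd (Cantor.of_nat n) in
  let b := fst (Cantor.of_nat r) in
  let d := snd (Cantor.of_nat r) in
  (zr a / INR (S d), zr b / INR (S d)).

Lemma zr_surj (z : Z) : exists n, zr n = IZR z.
Proof. exists (Cantor.to_nat (Z.to_nat z, Z.to_nat (- z))). unfold zr. rewrite Cantor.cancel_of_to. cbn [fst snd].
  rewrite !INR_IZR_INZ, <- minus_IZR. f_equal. lia. Qed.

Lemma Cmod_le_sum (z : C) : Cmod z <= Rabs (fst z) + Rabs (snd z).
Proof. destruct z as [x y]. unfold Cmod. simpl.
  rewrite <- (sqrt_Rsqr (Rabs x + Rabs y)) by (pose proof (Rabs_pos x); pose proof (Rabs_pos y); lra).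
  apply sqrt_le_1_alt. unfold Rsqr.
  pose proof (Rabs_pos x). pose proof (Rabs_pos y).
  assert (x * x = Rabs x * Rabs x) by (rewrite <- Rabs_mult; rewrite Rabs_pos_eq; nra).
  assert (y * y = Rabs y * Rabs y) by (rewrite <- Rabs_mult; rewrite Rabs_pos_eq; nra).
  nra. Qed.

Lemma round_close (r D : R) : 0 < D -> exists z : Z, Rabs (r - IZR z / D) <= / D.
Proof. intros HD. destruct (archimed (r * D)) as [H1 H2]. exists (up (r * D)).
  assert (r - IZR (up (r * D)) / D = - ((IZR (up (r * D)) - r * D) / D)) by (field; lra).
  rewrite H, Rabs_Ropp, Rabs_pos_eq.
  - unfold Rdiv. rewrite <- (Rmult_1_l (/ D)) at 2. apply Rmult_le_compat_r. left; apply Rinv_0_lt_compat; auto. lra.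
  - unfold Rdiv. apply Rmult_le_pos. lra. left; apply Rinv_0_lt_compat; auto. Qed.

Lemma qc_dense (c : C) delta : 0 < delta -> exists n, Cmod (Cminus c (qc n)) < delta.
Proof. intros Hd. destruct (nat_large (2 / delta)) as [d Hd2].
  set (D := INR (S d)).
  assert (HD : 0 < D) by (apply lt_0_INR; lia).
  assert (HD2 : 2 / delta < D) by (unfold D; rewrite S_INR; lra).
  destruct (round_close (fst c) D HD) as [za Ha]. destruct (round_close (snd c) D HD) as [zb Hb].
  destruct (zr_surj za) as [na Hna]. destruct (zr_surj zb) as [nb Hnb].
  exists (Cantor.to_nat (na, Cantor.to_nat (nb, d))).
  unfold qc. rewrite !Cantor.cancel_of_to. cbn [fst snd]. fold D. repeat rewrite Cantor.cancel_of_to; cbn [fst snd]. fold D. rewrite Hna, Hnb.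
  eapply Rle_lt_trans. apply Cmod_le_sum. destruct c as [x y]. simpl in *.
  assert (2 / delta * delta = 2) by (field; lra).
  assert (2 / D < delta).
  { apply (Rmult_lt_reg_r D); auto. unfold Rdiv. rewrite Rmult_assoc, Rinv_l by lra.
    apply (Rmult_lt_compat_r delta) in HD2; auto. lra. }
  unfold Rminus, Rdiv in *. lra. Qed.

Definition tgt (j : nat) : coeffs :=
  let r := snd (Cantor.of_nat j) in
  let M := fst (Cantor.of_nat r) in
  let r2 := snd (Cantor.of_nat r) in
  let L := fst (Cantor.of_nat r2) in
  let s := snd (Cantor.of_nat r2) in
  Pm M (S L) (fun x => qc (proj x s)).

Lemma tgt_good j : good (tgt j).
Proof. unfold tgt. apply Pm_good. lia. Qed.

Lemma tgt_hit M L s J : exists j, (J <= j)%nat /\ tgt j = Pm M (S L) (fun x => qc (proj x s)).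
Proof. exists (Cantor.to_nat (J, Cantor.to_nat (M, Cantor.to_nat (L, s)))). split.
  - pose proof (Cantor.to_nat_non_decreasing J (Cantor.to_nat (M, Cantor.to_nat (L, s)))). lia.
  - unfold tgt. repeat (rewrite Cantor.cancel_of_to; cbn [fst snd]). reflexivity. Qed.

Lemma sum_n_R_le_const (a : nat -> R) c N : (forall n, (n <= N)%nat -> a n <= c) -> sum_n a N <= INR (S N) * c.
Proof. intros H. rewrite <- sum_n_R_const. apply sum_n_R_le. auto. Qed.

Lemma dense_tgt w m0 g eps J : wlow w m0 -> low0 g -> L2 w g -> 0 < eps ->
  exists j, (J <= j)%nat /\ N2 w (csub g (tgt j)) < eps.
Proof. intros Hw Hg HL Heps. pose proof (wlow_pos _ _ Hw) as Hp. pose proof Hw as [Hm0 _].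
  destruct (trunc_close w 0 g (eps / 8) Hp Hg HL ltac:(lra)) as [M [_ [T1 T2]]].
  set (G := sum_n (fun x => Cmod (cf g x) ^ 2) M).
  assert (HG : 0 <= G) by apply sumsq_cf_nonneg.
  destruct (nat_large (INR (S M) * G * 4 / ((eps / 4) * m0))) as [L0 HL0].
  set (L := S L0).
  assert (HLr : INR (S M) * G * 4 / ((eps / 4) * m0) < INR L) by (unfold L; rewrite (S_INR L0); lra).
  assert (HLpos : 0 < INR L) by (apply lt_0_INR; unfold L; lia).
  destruct (N2_trunc_Pm w m0 M L g Hw ltac:(unfold L; lia)) as [Q1 Q2].
  (* rational approximation of coefficients *)
  assert (Hq : 0 < eps / 16 / (INR (S M) * INR (S M) * (4 / m0))).
  { apply Rdiv_lt_0_compat. lra.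
    apply Rmult_lt_0_compat. apply Rmult_lt_0_compat; apply lt_0_INR; lia. apply Rdiv_lt_0_compat; lra. }
  set (delta := sqrt (eps / 16 / (INR (S M) * INR (S M) * (4 / m0)))).
  assert (Hdpos : 0 < delta) by (apply sqrt_lt_R0; auto).
  assert (Hcode : forall x, exists n, Cmod (Cminus (g x) (qc n)) < delta) by (intro; apply qc_dense; auto).
  destruct (proj_surj (fun x => proj1_sig (constructive_indefinite_description _ (Hcode x))) M) as [s Hs].
  destruct (tgt_hit M L0 s J) as [j [Hj Ej]].
  exists j. split; auto. rewrite Ej. fold L.
  set (h' := fun x => qc (proj x s)).
  destruct (N2_Pm_sub w m0 M L g h' Hw ltac:(unfold L; lia)) as [R1 R2].
  assert (Hsum : sum_n (fun x => Cmod (Cminus (cf g x) (cf h' x)) ^ 2) M <= INR (S M) * delta ^ 2).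
  { apply sum_n_R_le_const. intros x Hx. unfold cf. destruct (3 <=? x)%nat.
    - unfold h'. rewrite Hs by auto.
      destruct (constructive_indefinite_description _ (Hcode x)) as [n Hn]. cbn [proj1_sig].
      apply pow_incr. split. apply Cmod_ge_0. lra.
    - replace (Cminus (RtoC 0) (RtoC 0)) with (RtoC 0) by Cring. rewrite Cmod_0. simpl. nra. }
  assert (Hdelta2 : delta ^ 2 = eps / 16 / (INR (S M) * INR (S M) * (4 / m0))).
  { unfold delta. apply pow2_sqrt. lra. }
  assert (HB3 : INR (S M) * sum_n (fun x => Cmod (Cminus (cf g x) (cf h' x)) ^ 2) M * (4 / m0) <= eps / 16).
  { assert (0 < INR (S M)) by (apply lt_0_INR; lia).
    assert (0 < 4 / m0) by (apply Rdiv_lt_0_compat; lra).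
    apply Rle_trans with (INR (S M) * (INR (S M) * delta ^ 2) * (4 / m0)).
    - apply Rmult_le_compat_r; [lra|]. apply Rmult_le_compat_l; lra.
    - rewrite Hdelta2. right. field. split; lra. }
  assert (HB2 : INR (S M) * G * / (INR L * m0) < eps / 16).
  { replace (eps / 16) with ((eps / 4) / 4) by field. apply arith_aux; try lra. apply Rmult_le_pos; auto. apply pos_INR. }
  (* combine: g - P' = (g - t) + ((t - P) + (P - P')) *)
  rewrite (cadd_sub3 g (trunc M g) (Pm M L h')).
  rewrite (cadd_sub3 (trunc M g) (Pm M L g) (Pm M L h')).
  destruct (N2_add w _ _ Hp Q1 R1) as [U1 U2].
  destruct (N2_add w _ _ Hp T1 U1) as [_ V2].
  eapply Rle_lt_trans. apply V2. unfold G in HB2. lra. Qed.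

Definition summ (w : nat -> R) := forall k, (3 <= k)%nat -> ex_series (fun n => / w (k * 2 ^ n)%nat).

Lemma fin_max (Q : nat -> nat -> Prop) D : (forall x, (x <= D)%nat -> exists M, forall M', (M <= M')%nat -> Q x M') ->
  exists M, forall x, (x <= D)%nat -> forall M', (M <= M')%nat -> Q x M'.
Proof. induction D; intros H.
  - destruct (H 0%nat ltac:(lia)) as [M HM]. exists M. intros x Hx M' HM'. assert (x = 0%nat) by lia. subst; auto.
  - destruct IHD as [M1 H1]. intros; apply H; lia.
    destruct (H (S D) ltac:(lia)) as [M2 H2]. exists (max M1 M2). intros x Hx M' HM'.
    destruct (Nat.eq_dec x (S D)) as [->|Hne]. apply H2; lia. apply H1; lia. Qed.

Lemma term_le_sum (a : nat -> R) j M : (forall n, 0 <= a n) -> (j <= M)%nat -> a j <= sum_n a M.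
Proof. intros Ha H. induction H.
  - destruct j. rewrite sum_O_R; lra. rewrite sum_Sn_R. pose proof (sum_n_R_nonneg a j Ha). lra.
  - rewrite sum_Sn_R. specialize (Ha (S m)). lra. Qed.

Lemma sum_gap (a : nat -> R) M1 M2 : (forall n, 0 <= a n) -> (M1 < M2)%nat -> sum_n a M1 + a M2 <= sum_n a M2.
Proof. intros Ha H. induction H.
  - rewrite sum_Sn_R. lra.
  - rewrite sum_Sn_R. pose proof (Ha (S m)). pose proof (sum_n_R_mono a M1 m Ha ltac:(lia)).
    pose proof (Ha (S m)). assert (a (S m) <= a (S m)) by lra.
    lra. Qed.

Lemma subseries (a : nat -> R) (phi : nat -> nat) T : (forall n, 0 <= a n) -> ex_series a ->
  (forall k, (phi k < phi (S k))%nat) -> (T < phi 0)%nat ->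
  ex_series (fun k => a (phi k)) /\
  Series (fun k => a (phi k)) <= Series (fun n => if (n <=? T)%nat then 0 else a n).
Proof. intros Ha He Hphi HT.
  set (a' := fun n => if (n <=? T)%nat then 0 else a n).
  assert (Ha' : forall n, 0 <= a' n) by (intro n; unfold a'; destruct (n <=? T)%nat; auto; lra).
  assert (He' : ex_series a').
  { apply (ser_le a' a); auto. intro n; split; auto. unfold a'; destruct (n <=? T)%nat; auto; lra. }
  assert (Hphi_ge : forall k, (T < phi k)%nat).
  { induction k; auto. specialize (Hphi k). lia. }
  assert (Heq : forall k, a (phi k) = a' (phi k)).
  { intro k. unfold a'. specialize (Hphi_ge k). destruct (phi k <=? T)%nat eqn:E; auto. apply Nat.leb_le in E; lia. }
  assert (Hp : forall K, sum_n (fun k => a (phi k)) K <= sum_n a' (phi K)).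
  { induction K.
    - rewrite sum_O_R. rewrite Heq. apply term_le_sum; auto.
    - rewrite sum_Sn_R. rewrite Heq. pose proof (sum_gap a' (phi K) (phi (S K)) Ha' (Hphi K)). lra. }
  apply ser_bound. intro; auto.
  intro K. eapply Rle_trans. apply Hp. apply ser_ge_partial; auto. Qed.

Lemma fin_coef_bound (f : coeffs) D : (forall n, (D < n)%nat -> f n = RtoC 0) ->
  exists B, 0 <= B /\ forall n, Cmod (f n) <= B.
Proof. intros H. exists (sum_n (fun x => Cmod (f x)) D). split.
  - apply sum_n_R_nonneg. intro; apply Cmod_ge_0.
  - intro n. destruct (Nat.le_gt_cases n D).
    + apply (term_le_sum (fun x => Cmod (f x))); auto. intro; apply Cmod_ge_0.
    + rewrite H by auto. rewrite Cmod_0. apply sum_n_R_nonneg. intro; apply Cmod_ge_0. Qed.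

Lemma N2_iterSh_fin w n f D : (forall m, (D < m)%nat -> f m = RtoC 0) ->
  L2 w (Nat.iter n Sh f) /\ N2 w (Nat.iter n Sh f) = sum_n (fun x => Cmod (f x) ^ 2 / w (2 ^ n * x)%nat) D.
Proof. intros H. split.
  - apply (L2_fin w _ (2 ^ n * D)). intros m Hm.
    apply (iterSh_supp n f 0 D); auto. intros k [Hk|Hk]; [lia|auto].
  - rewrite (N2_iterSh n w f D H). destruct (N2_fin (fun x => w (2 ^ n * x)%nat) f D H) as [_ E]. rewrite E. reflexivity. Qed.

Lemma pow2_gt n : (n < 2 ^ n)%nat.
Proof. induction n; simpl; lia. Qed.

Lemma pow2_mono a b : (a <= b)%nat -> (2 ^ a <= 2 ^ b)%nat.
Proof. intros. apply Nat.pow_le_mono_r; lia. Qed.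

Lemma iter_mul_S k N f : Nat.iter (S k * N) Sh f = Nat.iter N Sh (Nat.iter (k * N) Sh f).
Proof. rewrite <- Nat.iter_add. f_equal. Qed.

Lemma zero_series : ex_series (fun _ : nat => 0) /\ Series (fun _ : nat => 0) = 0.
Proof. destruct (ser_fin (fun _ => 0) 0 (fun _ _ => eq_refl)) as [A B]. split; auto. rewrite B, sum_O_R. reflexivity. Qed.

Lemma periodic_near w m0 p eps : wlow w m0 -> summ w -> good p -> 0 < eps ->
  exists f, low0 f /\ L2 w f /\ (exists N, (1 <= N)%nat /\ Nat.iter N Top f = f) /\
    N2 w (csub f p) < eps /\ exists B, 0 <= B /\ forall m, Cmod (f m) <= B * INR (S m).
Proof. intros Hw Hsum [Lp [[D0 HD0] [K HK]]] Heps. pose proof (wlow_pos _ _ Hw) as Hp.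
  set (D := (D0 + 3)%nat).
  assert (HD : forall n, (D < n)%nat -> p n = RtoC 0) by (intros; apply HD0; unfold D in *; lia).
  assert (Hsp : supp_in p 3 D) by (intros m [Hm|Hm]; [apply Lp; auto| apply HD; auto]).
  set (P2 := sum_n (fun x => Cmod (p x) ^ 2) D).
  assert (HP2 : 0 <= P2) by (apply sum_n_R_nonneg; intro; apply pow2_ge_0).
  set (delta := eps / (2 * (P2 + 1))).
  assert (Hdelta : 0 < delta) by (unfold delta; apply Rdiv_lt_0_compat; lra).
  destruct (fin_max (fun x M' => (3 <= x)%nat -> Series (fun n => if (n <=? M')%nat then 0 else / w (x * 2 ^ n)%nat) < delta) D)
    as [Mt HMt].
  { intros x _. destruct (Compare_dec.le_lt_dec 3 x) as [H3|H3].
    - destruct (ser_tail (fun n => / w (x * 2 ^ n)%nat) delta) as [M HM]; auto.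
      intro n. left. apply Rinv_0_lt_compat. apply Hp.
      exists M. intros M' HM' _. apply HM; auto.
    - exists 0%nat. intros. lia. }
  set (N := (Mt + K + D + 1)%nat).
  set (u := fun k => Nat.iter (k * N) Sh p).
  assert (Hsupp : forall k, supp_in (u k) (2 ^ (k * N) * 3) (2 ^ (k * N) * D)) by (intro k; apply iterSh_supp; auto).
  assert (Htri : tri u).
  { intros k m Hm. apply Hsupp. left. pose proof (pow2_gt k). pose proof (pow2_mono k (k * N) ltac:(unfold N; nia)). lia. }
  assert (HND : (D < 2 ^ N)%nat) by (pose proof (pow2_gt N); unfold N in *; lia).
  assert (Hdisj : disj u).
  { intros i j m Hij.
    assert (Hlt : forall a b, (a < b)%nat -> u a m = RtoC 0 \/ u b m = RtoC 0).
    { intros a b Hab. destruct (Nat.le_gt_cases m (2 ^ (a * N) * D)) as [Hm|Hm].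
      - right. apply Hsupp. left.
        assert (2 ^ (a * N) * 2 ^ N <= 2 ^ (b * N))%nat.
        { rewrite <- Nat.pow_add_r. apply pow2_mono. nia. }
        assert (2 ^ (a * N) * D < 2 ^ (a * N) * 2 ^ N)%nat.
        { apply Nat.mul_lt_mono_pos_l; auto. apply Nat.neq_0_lt_0, Nat.pow_nonzero; lia. }
        lia.
      - left. apply Hsupp. right. auto. }
    destruct (Nat.lt_gt_cases i j) as [[A|A] _]; auto. destruct (Hlt j i A); auto. }
  set (f := bsum u).
  set (v := fun k => u (S k)).
  assert (Hshift : f = cadd p (bsum v)).
  { unfold f. rewrite (bsum_shift u Htri). reflexivity. }
  assert (Hv : bsum v = Nat.iter N Sh f).
  { unfold f. rewrite (bsum_iterSh N u Htri). f_equal. apply functional_extensionality. intro k.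
    unfold v, u. apply iter_mul_S. }
  assert (Hflow : low0 f) by (apply bsum_low; intro k; apply iterSh_low; auto).
  assert (Htriv : tri v) by (intros k m Hm; apply Htri; lia).
  assert (Hdisjv : disj v) by (intros i j m Hij; apply Hdisj; lia).
  assert (HN2v : forall k, L2 w (v k) /\ N2 w (v k) = sum_n (fun x => Cmod (p x) ^ 2 / w (2 ^ (S k * N) * x)%nat) D)
    by (intro k; apply N2_iterSh_fin; auto).
  set (G := fun x k => Cmod (p x) ^ 2 * / w (x * 2 ^ (S k * N))%nat).
  assert (HG : forall x, (x <= D)%nat -> ex_series (G x) /\ Series (G x) <= Cmod (p x) ^ 2 * delta).
  { intros x Hx. destruct (Compare_dec.le_lt_dec 3 x) as [H3|H3].
    - destruct (subseries (fun n => / w (x * 2 ^ n)%nat) (fun k => (S k * N)%nat) (N - 1)) as [S1 S2].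
      + intro n. left. apply Rinv_0_lt_compat. apply Hp.
      + apply Hsum; auto.
      + intro k. unfold N. nia.
      + unfold N. lia.
      + split.
        * unfold G. apply (ex_series_scal_l (V := R_NormedModule) (Cmod (p x) ^ 2)) in S1. exact S1.
        * unfold G. rewrite Series_scal_l. apply Rmult_le_compat_l. apply pow2_ge_0.
          left. eapply Rle_lt_trans. apply S2. apply HMt; auto. unfold N; lia.
    - assert (E : forall k, G x k = 0) by (intro k; unfold G; rewrite Lp by auto; rewrite Cmod_0; simpl; ring).
      rewrite (Series_ext _ _ E). destruct zero_series as [Z1 Z2]. split.
      + apply (ex_series_ext (fun _ => 0)); auto.
      + rewrite Z2, Lp by auto. rewrite Cmod_0. simpl. lra. }
  destruct (ser_sum G D) as [GS1 GS2]. intros; apply HG; auto.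
  assert (EN : forall k, N2 w (v k) = sum_n (fun x => G x k) D).
  { intro k. destruct (HN2v k) as [_ E]. rewrite E. apply sum_n_ext. intro x. unfold G. unfold Rdiv.
    rewrite Nat.mul_comm. reflexivity. }
  assert (HexN : ex_series (fun k => N2 w (v k))) by (apply (ex_series_ext _ _ (fun k => eq_sym (EN k))); auto).
  assert (HserN : Series (fun k => N2 w (v k)) <= delta * P2).
  { rewrite (Series_ext _ _ EN), GS2. unfold P2. rewrite <- sum_n_R_scal. apply sum_n_R_le. intros x Hx.
    destruct (HG x Hx). lra. }
  destruct (bsum_norm w v Hp Htriv Hdisjv (fun k => proj1 (HN2v k)) HexN) as [Bv1 Bv2].
  exists f. split; [auto|split; [|split; [|split]]].
  - rewrite Hshift. apply N2_add; auto. apply (L2_fin w p D HD).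
  - exists N. split. unfold N; lia.
    rewrite Hshift at 1. rewrite iterTop_add.
    rewrite (kill_mono p K N HK) by (unfold N; lia).
    rewrite Hv, iterTop_Sh by auto.
    apply functional_extensionality. intro n. unfold cadd, czero. Cring.
  - assert (E : csub f p = bsum v).
    { rewrite Hshift at 1. apply functional_extensionality. intro n. unfold csub, cadd. Cring. }
    rewrite E. eapply Rle_lt_trans. apply Bv2. eapply Rle_lt_trans. apply HserN.
    assert (H1 : P2 * / (2 * (P2 + 1)) < 1).
    { apply (Rmult_lt_reg_r (2 * (P2 + 1))). lra. rewrite Rmult_assoc, Rinv_l by lra. lra. }
    unfold delta. replace (eps / (2 * (P2 + 1)) * P2) with (eps * (P2 * / (2 * (P2 + 1)))) by (unfold Rdiv; ring).
    assert (0 <= P2 * / (2 * (P2 + 1))) by (apply Rmult_le_pos; auto; left; apply Rinv_0_lt_compat; lra).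
    nra.
  - destruct (fin_coef_bound p D HD) as [B [HB0 HB]].
    exists B. split; auto. intro m. eapply Rle_trans. apply bsum_coef.
    eapply Rle_trans. apply (sum_n_R_le_const _ B). intros k _. apply iterSh_coef; auto.
    rewrite Rmult_comm. lra. Qed.

Lemma pow2_pos n : (0 < 2 ^ n)%nat.
Proof. apply Nat.neq_0_lt_0, Nat.pow_nonzero; lia. Qed.

Lemma fam_tri_disj (e : nat -> nat) (s : nat -> coeffs) (D : nat -> nat) :
  (forall k, supp_in (s k) 3 (D k)) -> (forall k, (k <= e k)%nat) ->
  (forall k k', (k < k')%nat -> (e k + D k < e k')%nat) ->
  tri (fun k => Nat.iter (e k) Sh (s k)) /\ disj (fun k => Nat.iter (e k) Sh (s k)).
Proof. intros Hs He Hlt.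
  assert (Hsupp : forall k, supp_in (Nat.iter (e k) Sh (s k)) (2 ^ (e k) * 3) (2 ^ (e k) * D k))
    by (intro k; apply iterSh_supp; auto).
  split.
  - intros k m Hm. apply Hsupp. left. pose proof (pow2_gt k). pose proof (pow2_mono k (e k) (He k)). lia.
  - intros i j m Hij.
    assert (H : forall a b, (a < b)%nat -> Nat.iter (e a) Sh (s a) m = RtoC 0 \/ Nat.iter (e b) Sh (s b) m = RtoC 0).
    { intros a b Hab. destruct (Nat.le_gt_cases m (2 ^ (e a) * D a)) as [Hm|Hm].
      - right. apply Hsupp. left.
        assert (2 ^ (e a) * 2 ^ (D a) <= 2 ^ (e b))%nat.
        { rewrite <- Nat.pow_add_r. apply pow2_mono. specialize (Hlt a b Hab). lia. }
        assert (2 ^ (e a) * D a < 2 ^ (e a) * 2 ^ (D a))%nat.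
        { apply Nat.mul_lt_mono_pos_l. apply pow2_pos. apply pow2_gt. }
        lia.
      - left. apply Hsupp. right. auto. }
    destruct (Nat.lt_gt_cases i j) as [[A|A] _]; auto. destruct (H j i A); auto. Qed.

Lemma frac_le c d : 0 <= c -> 0 < d -> c * (d / (c + 1)) <= d.
Proof. intros Hc Hd. replace (c * (d / (c + 1))) with (d - d / (c + 1)) by (field; lra).
  assert (0 < d / (c + 1)) by (apply Rdiv_lt_0_compat; lra). lra. Qed.

Lemma gap_exists w m0 p D delta : wlow w m0 -> summ w -> low0 p -> (forall n, (D < n)%nat -> p n = RtoC 0) -> 0 < delta ->
  exists G, forall n, (G <= n)%nat -> N2 w (Nat.iter n Sh p) <= delta.
Proof. intros Hw Hsum Lp HD Hd. pose proof (wlow_pos _ _ Hw) as Hp.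
  set (d' := delta / INR (S D)).
  assert (Hd' : 0 < d') by (unfold d'; apply Rdiv_lt_0_compat; auto; apply lt_0_INR; lia).
  destruct (fin_max (fun x n => Cmod (p x) ^ 2 / w (2 ^ n * x)%nat <= d') D) as [G HG].
  { intros x _. destruct (Compare_dec.le_lt_dec 3 x) as [H3|H3].
    - pose proof (ex_series_lim_0 _ (Hsum x H3)) as Hl. apply is_lim_seq_spec in Hl.
      destruct (Hl (mkposreal (d' / (Cmod (p x) ^ 2 + 1)) ltac:(apply Rdiv_lt_0_compat; auto; pose proof (pow2_ge_0 (Cmod (p x))); lra))) as [M HM].
      exists M. intros M' HM'. specialize (HM M' HM'). cbn [pos] in HM.
      rewrite Rminus_0_r in HM. rewrite Rabs_pos_eq in HM by (left; apply Rinv_0_lt_compat, Hp).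
      rewrite Nat.mul_comm. unfold Rdiv.
      pose proof (pow2_ge_0 (Cmod (p x))).
      apply Rle_trans with (Cmod (p x) ^ 2 * (d' / (Cmod (p x) ^ 2 + 1))).
      + apply Rmult_le_compat_l; auto. lra.
      + apply frac_le; auto.
    - exists 0%nat. intros. rewrite Lp by auto. rewrite Cmod_0. simpl. unfold Rdiv. rewrite Rmult_0_l, Rmult_0_l. lra. }
  exists G. intros n Hn. destruct (N2_iterSh_fin w n p D HD) as [_ E]. rewrite E.
  eapply Rle_trans. apply (sum_n_R_le_const _ d'). intros x Hx. apply HG; auto.
  unfold d'. right. field. apply not_0_INR. lia. Qed.

Definition qD (q : nat * nat * nat * nat) := fst (fst (fst q)).
Definition qK (q : nat * nat * nat * nat) := snd (fst (fst q)).
Definition qB (q : nat * nat * nat * nat) := snd (fst q).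
Definition qG (q : nat * nat * nat * nat) := snd q.

Definition PJ (w : nat -> R) (t : nat -> coeffs) (j : nat) (q : nat * nat * nat * nat) : Prop :=
  supp_in (t j) 3 (qD q) /\ Nat.iter (qK q) Top (t j) = czero /\ (forall m, Cmod (t j m) <= INR (qB q)) /\
  (forall n, (qG q <= n)%nat -> N2 w (Nat.iter n Sh (t j)) <= (/ 2) ^ j).

Lemma PJ_ex w m0 t j : wlow w m0 -> summ w -> good (t j) -> exists q, PJ w t j q.
Proof. intros Hw Hsum [Lp [[D0 HD0] [K HK]]].
  set (D := (D0 + 3)%nat).
  assert (HD : forall n, (D < n)%nat -> t j n = RtoC 0) by (intros; apply HD0; unfold D in *; lia).
  destruct (fin_coef_bound (t j) D HD) as [B [HB0 HB]].
  destruct (nat_large B) as [Bn HBn].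
  destruct (gap_exists w m0 (t j) D ((/ 2) ^ j) Hw Hsum Lp HD) as [G HG].
  { apply pow_lt. lra. }
  exists (D, K, Bn, G). unfold PJ, qD, qK, qB, qG; simpl. split; [|split; [|split]]; auto.
  - intros m [Hm|Hm]; [apply Lp; auto | apply HD; auto].
  - intro m. specialize (HB m). lra. Qed.

Fixpoint nseq (c : nat -> nat) (j : nat) : nat :=
  match j with O => c 0%nat | S j' => (nseq c j' + c j' + c (S j'))%nat end.

Lemma nseq_gap c i i' : (i < i')%nat -> (nseq c i + c i + c i' <= nseq c i')%nat.
Proof. intros H. induction H.
  - simpl. lia.
  - simpl. lia. Qed.

Lemma nseq_mono c i i' : (i <= i')%nat -> (nseq c i <= nseq c i')%nat.
Proof. intros H. destruct (Nat.eq_dec i i'). subst; lia. pose proof (nseq_gap c i i' ltac:(lia)). lia. Qed.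

Lemma nseq_ge c j : (c j <= nseq c j)%nat.
Proof. destruct j; simpl; lia. Qed.

Lemma nseq_lin c j : (forall k, (1 <= c k)%nat) -> (j <= nseq c j)%nat.
Proof. intros Hc. induction j. lia. simpl. specialize (Hc j). lia. Qed.

Lemma geom_tail j : ex_series (fun k => (/ 2) ^ (j + S k)) /\ Series (fun k => (/ 2) ^ (j + S k)) = (/ 2) ^ j.
Proof.
  assert (E : forall k, (/ 2) ^ (j + S k) = (/ 2) ^ (S j) * (/ 2) ^ k).
  { intro k. rewrite <- pow_add. f_equal. lia. }
  assert (Hg : is_series (fun k => (/ 2) ^ k) (/ (1 - / 2))) by (apply is_series_geom; rewrite Rabs_pos_eq; lra).
  split.
  - apply (ex_series_ext (fun k => (/ 2) ^ (S j) * (/ 2) ^ k)). intro; symmetry; apply E.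
    apply (ex_series_scal_l (V := R_NormedModule)). eexists; eauto.
  - rewrite (Series_ext _ _ E), Series_scal_l.
    assert (Series (pow (/ 2)) = / (1 - / 2)) as -> by (apply is_series_unique; exact Hg).
    simpl. field. Qed.

Lemma N2_csub_sym w f g : N2 w (csub f g) = N2 w (csub g f).
Proof. unfold N2. apply Series_ext. intro n. unfold wsum, csub.
  replace (Cminus (f n) (g n)) with (Copp (Cminus (g n) (f n))) by Cring. rewrite Cmod_opp. reflexivity. Qed.

Lemma L2_csub_sym w f g : L2 w (csub f g) -> L2 w (csub g f).
Proof. unfold L2. apply ex_series_ext. intro n. unfold wsum, csub.
  replace (Cminus (f n) (g n)) with (Copp (Cminus (g n) (f n))) by Cring. rewrite Cmod_opp. reflexivity. Qed.

Lemma supp_low f D : supp_in f 3 D -> low0 f.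
Proof. intros H n Hn. apply H. left; auto. Qed.

Lemma supp_fin f D : supp_in f 3 D -> forall n, (D < n)%nat -> f n = RtoC 0.
Proof. intros H n Hn. apply H. right; auto. Qed.

Lemma hyper_core w m0 t : wlow w m0 -> summ w -> (forall j, good (t j)) ->
  exists f, low0 f /\ L2 w f /\ (forall m, Cmod (f m) <= INR (S m) * INR (S m)) /\
    forall j, exists N, L2 w (csub (Nat.iter N Top f) (t j)) /\ N2 w (csub (Nat.iter N Top f) (t j)) <= (/ 2) ^ j.
Proof. intros Hw Hsum Ht. pose proof (wlow_pos _ _ Hw) as Hp.
  set (Q := fun j => proj1_sig (constructive_indefinite_description _ (PJ_ex w m0 t j Hw Hsum (Ht j)))).
  assert (HQ : forall j, PJ w t j (Q j)).
  { intro j. unfold Q. destruct (constructive_indefinite_description _ _). simpl. auto. }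
  set (D := fun j => qD (Q j)). set (K := fun j => qK (Q j)). set (B := fun j => qB (Q j)). set (G := fun j => qG (Q j)).
  assert (Hsupp : forall j, supp_in (t j) 3 (D j)) by (intro j; apply (HQ j)).
  assert (HK : forall j, Nat.iter (K j) Top (t j) = czero) by (intro j; apply (HQ j)).
  assert (HB : forall j m, Cmod (t j m) <= INR (B j)) by (intro j; apply (HQ j)).
  assert (HG : forall j n, (G j <= n)%nat -> N2 w (Nat.iter n Sh (t j)) <= (/ 2) ^ j) by (intro j; apply (HQ j)).
  assert (Hlow : forall j, low0 (t j)) by (intro j; apply (supp_low _ _ (Hsupp j))).
  set (c := fun j => (D j + K j + B j + G j + 1)%nat).
  assert (Hc1 : forall k, (1 <= c k)%nat) by (intro k; unfold c; lia).
  set (n := nseq c).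
  assert (Hgap : forall i i', (i < i')%nat -> (n i + c i + c i' <= n i')%nat) by (intros; apply nseq_gap; auto).
  assert (Hmono : forall i i', (i <= i')%nat -> (n i <= n i')%nat) by (intros; apply nseq_mono; auto).
  assert (Hge : forall j, (c j <= n j)%nat) by (intro; apply nseq_ge).
  assert (Hlin : forall j, (j <= n j)%nat) by (intro; apply nseq_lin; auto).
  set (a := fun j k : nat => Nat.iter (n (j + k) - n j)%nat Sh (t (j + k)%nat)).
  set (W := fun j => bsum (a j)).
  assert (Hfa : forall j, tri (a j) /\ disj (a j)).
  { intro j. apply (fam_tri_disj (fun k => n (j + k)%nat - n j)%nat (fun k => t (j + k)%nat) (fun k => D (j + k)%nat)).
    - intro k. apply Hsupp.
    - intro k. destruct k. lia. pose proof (Hgap j (j + S k)%nat ltac:(lia)). pose proof (Hc1 j). pose proof (Hc1 (j + S k)%nat).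
      assert (forall i, (n j + i <= n (j + i))%nat).
      { induction i. rewrite !Nat.add_0_r; lia. pose proof (Hgap (j + i)%nat (j + S i)%nat ltac:(lia)). pose proof (Hc1 (j + i)%nat). lia. }
      specialize (H2 (S k)). lia.
    - intros k k' Hkk. pose proof (Hgap (j + k)%nat (j + k')%nat ltac:(lia)). pose proof (Hmono j (j + k)%nat ltac:(lia)).
      unfold c in H. lia. }
  assert (Hfa' : forall j, tri (fun k => a j (S k)) /\ disj (fun k => a j (S k))).
  { intro j. destruct (Hfa j) as [T1 T2]. split.
    - intros k m Hm. apply T1. lia.
    - intros i i' m Hii. apply T2. lia. }
  assert (HWlow : forall j, low0 (W j)).
  { intro j. apply bsum_low. intro k. apply iterSh_low. auto. }
  assert (Hstep : forall j, W j = cadd (t j) (Nat.iter (n (S j) - n j) Sh (W (S j)))).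
  { intro j. unfold W at 1. rewrite (bsum_shift (a j) (proj1 (Hfa j))). f_equal.
    - unfold a. rewrite Nat.add_0_r, Nat.sub_diag. reflexivity.
    - unfold W. rewrite (bsum_iterSh _ (a (S j)) (proj1 (Hfa (S j)))). f_equal.
      apply functional_extensionality. intro k. unfold a. rewrite <- Nat.iter_add.
      replace (j + S k)%nat with (S j + k)%nat by lia. f_equal.
      pose proof (Hmono j (S j) ltac:(lia)). pose proof (Hmono (S j) (S j + k)%nat ltac:(lia)). lia. }
  set (f := Nat.iter (n 0%nat) Sh (W 0%nat)).
  assert (Hf : f = bsum (fun k => Nat.iter (n k) Sh (t k))).
  { unfold f, W. rewrite (bsum_iterSh _ (a 0%nat) (proj1 (Hfa 0%nat))). f_equal.
    apply functional_extensionality. intro k. unfold a. rewrite <- Nat.iter_add. simpl.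
    f_equal. pose proof (Hmono 0%nat k ltac:(lia)). lia. }
  assert (Hit : forall j, Nat.iter (n j) Top f = W j).
  { induction j.
    - unfold f. apply iterTop_Sh. auto.
    - replace (n (S j)) with ((n (S j) - n j) + n j)%nat by (pose proof (Hmono j (S j) ltac:(lia)); lia).
      rewrite Nat.iter_add, IHj. rewrite (Hstep j) at 1. rewrite iterTop_add.
      rewrite iterTop_Sh by auto.
      rewrite (kill_mono (t j) (K j)); auto.
      + apply functional_extensionality. intro m. unfold cadd, czero. Cring.
      + pose proof (Hgap j (S j) ltac:(lia)). unfold c in H. lia. }
  assert (HNa : forall j k, L2 w (a j (S k)) /\ N2 w (a j (S k)) <= (/ 2) ^ (j + S k)).
  { intros j k. unfold a. split.
    - apply (N2_iterSh_fin w _ _ (D (j + S k)%nat)). apply supp_fin; auto.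
    - apply HG. pose proof (Hgap j (j + S k)%nat ltac:(lia)). pose proof (Hge (j + S k)%nat). unfold c in *. lia. }
  exists f. split; [|split; [|split]].
  - rewrite Hf. apply bsum_low. intro k. apply iterSh_low; auto.
  - rewrite Hf.
    destruct (fam_tri_disj n t D Hsupp Hlin) as [T1 T2].
    { intros k k' Hkk. pose proof (Hgap k k' Hkk). unfold c in H. lia. }
    destruct (geom_tail 0) as [G1 G2].
    assert (HNu : forall k, L2 w (Nat.iter (n k) Sh (t k)) /\ N2 w (Nat.iter (n k) Sh (t k)) <= (/ 2) ^ k).
    { intro k. split. apply (N2_iterSh_fin w _ _ (D k)). apply supp_fin; auto.
      apply HG. pose proof (Hge k). unfold c in *. lia. }
    assert (Hex : ex_series (fun k => N2 w (Nat.iter (n k) Sh (t k)))).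
    { apply (ser_le _ (fun k => (/ 2) ^ k)).
      - intro k. split. apply N2_nonneg; auto. apply HNu. apply HNu.
      - apply ex_series_geom. rewrite Rabs_pos_eq; lra. }
    apply (bsum_norm w _ Hp T1 T2 (fun k => proj1 (HNu k)) Hex).
  - intro m. rewrite Hf. eapply Rle_trans. apply bsum_coef.
    eapply Rle_trans. apply (sum_n_R_le_const _ (INR m)).
    + intros k _. destruct (Nat.lt_ge_cases m (2 ^ (n k) * 3)) as [Hm|Hm].
      * rewrite (iterSh_supp (n k) (t k) 3 (D k) (Hsupp k)) by (left; auto). rewrite Cmod_0. apply pos_INR.
      * eapply Rle_trans. apply iterSh_coef. apply HB. apply pos_INR. apply le_INR.
        pose proof (pow2_gt (B k)). pose proof (pow2_mono (B k) (n k)). pose proof (Hge k). unfold c in *. lia.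
    + apply Rmult_le_compat_l. apply pos_INR. apply le_INR. lia.
  - intro j. exists (n j). rewrite Hit.
    assert (E : csub (W j) (t j) = bsum (fun k => a j (S k))).
    { unfold W at 1. rewrite (bsum_shift (a j) (proj1 (Hfa j))). apply functional_extensionality. intro m.
      unfold csub, cadd. unfold a at 1. rewrite Nat.add_0_r, Nat.sub_diag. simpl. Cring. }
    rewrite E.
    destruct (geom_tail j) as [G1 G2].
    assert (Hex : ex_series (fun k => N2 w (a j (S k)))).
    { apply (ser_le _ (fun k => (/ 2) ^ (j + S k))); auto.
      intro k. split. apply N2_nonneg; auto. apply HNa. apply HNa. }
    destruct (bsum_norm w _ Hp (proj1 (Hfa' j)) (proj2 (Hfa' j)) (fun k => proj1 (HNa j k)) Hex) as [Z1 Z2].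
    split; auto. eapply Rle_trans. apply Z2. rewrite <- G2. apply Series_le; auto.
    intro k. split. apply N2_nonneg; auto. apply HNa. apply HNa. Qed.

Lemma poly_geom s : 0 < s < 1 -> ex_series (fun n => INR (S n) * INR (S n) * s ^ n).
Proof. intros Hs.
  set (a := fun n => INR (S n) * INR (S n) * s ^ n).
  assert (Hpos : forall n, 0 < a n).
  { intro n. unfold a. apply Rmult_lt_0_compat. apply Rmult_lt_0_compat; apply lt_0_INR; lia. apply pow_lt; lra. }
  assert (Hinv : is_lim_seq (fun n => / INR (S n)) 0).
  { assert (H1 : is_lim_seq (fun n => INR (S n)) p_infty) by (apply (is_lim_seq_incr_1 INR); apply is_lim_seq_INR).
    pose proof (is_lim_seq_inv _ _ H1 ltac:(discriminate)) as H2. simpl in H2. exact H2. }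
  pose proof (is_lim_seq_plus' _ _ 1 0 (is_lim_seq_const 1) Hinv) as Hq. rewrite Rplus_0_r in Hq.
  pose proof (is_lim_seq_mult' _ _ 1 1 Hq Hq) as Hq2.
  pose proof (is_lim_seq_mult' _ _ (1 * 1) s Hq2 (is_lim_seq_const s)) as Hr.
  replace (1 * 1 * s) with s in Hr by ring.
  assert (Hd : ex_series (fun n => Rabs (a n))).
  { apply (ex_series_DAlembert a s). lra. intro n. specialize (Hpos n). lra.
    apply (is_lim_seq_ext (fun n => (1 + / INR (S n)) * (1 + / INR (S n)) * s)); auto.
    intro n. rewrite Rabs_pos_eq.
    - unfold a. rewrite (S_INR (S n)). simpl pow.
      assert (0 < INR (S n)) by (apply lt_0_INR; lia).
      assert (0 < s ^ n) by (apply pow_lt; lra).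
      field. split; lra.
    - left. apply Rdiv_lt_0_compat; auto. }
  apply (ex_series_ext (fun n => Rabs (a n))); auto. intro n. apply Rabs_pos_eq. left; auto. Qed.

Lemma holo_of_bound (c : coeffs) B : (forall m, Cmod (c m) <= B * (INR (S m) * INR (S m))) -> holo_disk c.
Proof. intros H r Hr.
  assert (HB : 0 <= B). { specialize (H 0%nat). pose proof (Cmod_ge_0 (c 0%nat)). simpl in H. lra. }
  set (s := (1 + r) / 2).
  assert (Hs : 0 < s < 1) by (unfold s; lra).
  apply (ser_le _ (fun n => B * (INR (S n) * INR (S n) * s ^ n))).
  - intro n. split. apply Rmult_le_pos. apply Cmod_ge_0. apply pow_le; lra.
    rewrite <- Rmult_assoc. apply Rmult_le_compat; auto. apply Cmod_ge_0. apply pow_le; lra.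
    apply pow_incr. unfold s; lra.
  - apply (ex_series_scal_l (V := R_NormedModule)). apply poly_geom; auto. Qed.

Lemma normX_lt w h eps : wpos w -> L2 w h -> 0 < eps -> N2 w h < eps ^ 2 -> normX w h < eps.
Proof. intros Hw HL He H. unfold normX. fold (N2 w h).
  rewrite <- (sqrt_pow2 eps) by lra. apply sqrt_lt_1_alt. split; auto. apply N2_nonneg; auto. Qed.

Lemma good_L2 w p : good p -> L2 w p.
Proof. intros [_ [[D HD] _]]. apply (L2_fin w p D HD). Qed.

Lemma geom_small d : 0 < d -> exists J, (/ 2) ^ J < d.
Proof. intros Hd. pose proof (is_lim_seq_geom (/ 2) ltac:(rewrite Rabs_pos_eq; lra)) as H.
  apply is_lim_seq_spec in H. destruct (H (mkposreal d Hd)) as [J HJ]. exists J.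
  specialize (HJ J (le_n J)). cbn [pos] in HJ. rewrite Rminus_0_r, Rabs_pos_eq in HJ; auto.
  apply pow_le; lra. Qed.

Lemma geom_mono J j : (J <= j)%nat -> (/ 2) ^ j <= (/ 2) ^ J.
Proof. intros H. replace j with (J + (j - J))%nat by lia. rewrite pow_add.
  rewrite <- (Rmult_1_r ((/ 2) ^ J)) at 2. apply Rmult_le_compat_l. apply pow_le; lra.
  clear. induction (j - J)%nat. simpl; lra. simpl. assert (0 <= (/ 2) ^ n) by (apply pow_le; lra). lra. Qed.

Lemma chaotic_core w m0 : wlow w m0 -> summ w -> chaotic w.
Proof. intros Hw Hsum. pose proof (wlow_pos _ _ Hw) as Hp. split.
  -
    destruct (hyper_core w m0 tgt Hw Hsum tgt_good) as [f [Hfl [HfL [Hfc Hfj]]]].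
    exists f. split.
    + split; [exact Hfl|split; [|exact HfL]]. apply (holo_of_bound f 1). intro m. rewrite Rmult_1_l. apply Hfc.
    + intros g [Hgl [_ HgL]] eps Heps.
      assert (He2 : 0 < eps ^ 2 / 4) by (apply Rdiv_lt_0_compat; [apply pow_lt|]; lra).
      destruct (geom_small _ He2) as [J HJ].
      destruct (dense_tgt w m0 g (eps ^ 2 / 4) J Hw Hgl HgL He2) as [j [Hj Hgt]].
      destruct (Hfj j) as [N [HN1 HN2]].
      exists N.
      assert (HLtg : L2 w (csub (tgt j) g)) by (apply N2_sub; auto; apply good_L2; apply tgt_good).
      rewrite (cadd_sub3 _ (tgt j) g).
      destruct (N2_add w _ _ Hp HN1 HLtg) as [A1 A2].
      apply normX_lt; [exact Hp | exact A1 | lra | ].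
      rewrite (N2_csub_sym w (tgt j) g) in A2. pose proof (geom_mono J j Hj). lra.
  -
    intros g [Hgl [_ HgL]] eps Heps.
    assert (He2 : 0 < eps ^ 2 / 4) by (apply Rdiv_lt_0_compat; [apply pow_lt|]; lra).
    destruct (dense_good w m0 g (eps ^ 2 / 4) Hw Hgl HgL He2) as [p [Hpg [HpL Hgp]]].
    destruct (periodic_near w m0 p (eps ^ 2 / 4) Hw Hsum Hpg He2) as [f [Hfl [HfL [Hper [Hfp [B [HB0 HB]]]]]]].
    exists f. split; [|split; auto].
    + split; [exact Hfl|split; [|exact HfL]]. apply (holo_of_bound f B). intro m.
      eapply Rle_trans. apply HB. apply Rmult_le_compat_l; auto.
      assert (1 <= INR (S m)) by (apply (le_INR 1); lia). nra.
    + assert (L2 w (csub f p)) by (apply N2_sub; auto).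
      assert (L2 w (csub p g)) by (apply N2_sub; auto).
      rewrite (cadd_sub3 f p g).
      destruct (N2_add w _ _ Hp H H0) as [A1 A2].
      apply normX_lt; [exact Hp | exact A1 | lra | ].
      rewrite (N2_csub_sym w p g) in A2. lra. Qed.

Lemma wsum_transfer (w1 w2 : nat -> R) (c : coeffs) :
  (forall n, n <> 0%nat -> w1 n = w2 n) -> c 0%nat = RtoC 0 -> wsum w1 c = wsum w2 c.
Proof. intros H Hc. apply functional_extensionality. intro n. unfold wsum.
  destruct (Nat.eq_dec n 0) as [->|Hn].
  - rewrite Hc, Cmod_0. unfold Rdiv. simpl. ring.
  - rewrite H; auto. Qed.

Lemma in_X_transfer w1 w2 c : (forall n, n <> 0%nat -> w1 n = w2 n) -> in_X w1 c -> in_X w2 c.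
Proof. intros H [Hl [Hh He]]. split; [auto|split; auto].
  rewrite <- (wsum_transfer w1 w2 c H); auto. Qed.

Lemma normX_transfer w1 w2 c : (forall n, n <> 0%nat -> w1 n = w2 n) -> c 0%nat = RtoC 0 -> normX w1 c = normX w2 c.
Proof. intros H Hc. unfold normX. rewrite (wsum_transfer w1 w2 c H Hc). reflexivity. Qed.

Lemma iterTop_0 N f : f 0%nat = RtoC 0 -> Nat.iter N Top f 0%nat = RtoC 0.
Proof. intros H. destruct N. auto. simpl. apply Top_low. lia. Qed.

Lemma chaotic_transfer w1 w2 : (forall n, n <> 0%nat -> w1 n = w2 n) -> chaotic w1 -> chaotic w2.
Proof. intros H [[f [Hf Hd]] Hp].
  assert (H' : forall n, n <> 0%nat -> w2 n = w1 n) by (intros; symmetry; auto).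
  split.
  - exists f. split. apply (in_X_transfer w1 w2 f H Hf).
    intros g Hg eps Heps. destruct (Hd g (in_X_transfer w2 w1 g H' Hg) eps Heps) as [N HN].
    exists N. rewrite <- (normX_transfer w1 w2); auto.
    unfold csub. rewrite iterTop_0. destruct Hg as [Hg _]. rewrite Hg by lia. Cring.
    destruct Hf as [Hf _]. apply Hf. lia.
  - intros g Hg eps Heps. destruct (Hp g (in_X_transfer w2 w1 g H' Hg) eps Heps) as [f' [Hf' [Hper Hn]]].
    exists f'. split. apply (in_X_transfer w1 w2 f' H Hf'). split; auto.
    rewrite <- (normX_transfer w1 w2); auto.
    unfold csub. destruct Hf' as [Hf' _]. destruct Hg as [Hg _]. rewrite Hf', Hg by lia. Cring. Qed.

Lemma general (omega : nat -> R) :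
  (forall n : nat, (1 <= n)%nat -> 0 < omega n) ->
  (exists m : R, 0 < m /\ forall n : nat, (1 <= n)%nat -> m <= omega n) ->
  (forall k : nat, (3 <= k)%nat -> ex_series (fun n : nat => / omega (k * 2 ^ n)%nat)) ->
  chaotic omega.
Proof. intros Hpos [m [Hm Hlow]] Hsum.
  set (w := fun n => if (n =? 0)%nat then omega 1%nat else omega n).
  assert (Hw : forall n, n <> 0%nat -> w n = omega n).
  { intros n Hn. unfold w. destruct (n =? 0)%nat eqn:E; auto. apply Nat.eqb_eq in E. lia. }
  apply (chaotic_transfer w omega Hw).
  apply (chaotic_core w m).
  - split; auto. intro n. unfold w. destruct (n =? 0)%nat eqn:E. apply Hlow; lia.
    apply Nat.eqb_neq in E. apply Hlow; lia.
  - intros k Hk. apply (ex_series_ext (fun n => / omega (k * 2 ^ n)%nat)); [|apply Hsum; auto].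
    intro n. rewrite Hw; auto. pose proof (pow2_pos n). nia. Qed.

Lemma omega0_ok :
  (forall n : nat, (1 <= n)%nat -> 0 < omega0 n) /\
  (exists m : R, 0 < m /\ forall n : nat, (1 <= n)%nat -> m <= omega0 n) /\
  (forall k : nat, (3 <= k)%nat -> ex_series (fun n : nat => / omega0 (k * 2 ^ n)%nat)).
Proof. pose proof PI_RGT_0 as HPI. split; [|split].
  - intros n _. unfold omega0. apply Rdiv_lt_0_compat; auto. apply lt_0_INR. lia.
  - exists (/ PI). split. apply Rinv_0_lt_compat; auto. intros n Hn. unfold omega0.
    unfold Rdiv. rewrite <- (Rmult_1_l (/ PI)) at 1. apply Rmult_le_compat_r. left; apply Rinv_0_lt_compat; auto.
    apply (le_INR 1). lia.
  - intros k Hk. apply (ser_le _ (fun n => PI * (/ 2) ^ n)).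
    + intro n. unfold omega0.
      assert (HI : 0 < INR (k * 2 ^ n + 1)) by (apply lt_0_INR; lia).
      assert (HI2 : 2 ^ n <= INR (k * 2 ^ n + 1)).
      { replace (2 ^ n) with (INR (2 ^ n)%nat) by (rewrite pow_INR; simpl; f_equal; ring). apply le_INR.
        pose proof (pow2_pos n). nia. }
      assert (H2 : 0 < 2 ^ n) by (apply pow_lt; lra).
      replace (/ (INR (k * 2 ^ n + 1) / PI)) with (PI * / INR (k * 2 ^ n + 1)) by (field; lra).
      split.
      * apply Rmult_le_pos. lra. left; apply Rinv_0_lt_compat; auto.
      * apply Rmult_le_compat_l. lra. rewrite <- Rinv_pow by lra. apply Rinv_le_contravar; auto.
    + apply (ex_series_scal_l (V := R_NormedModule)). apply ex_series_geom. rewrite Rabs_pos_eq; lra. Qed.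

Theorem theorem3p18 :
  (forall omega : nat -> R,
     (forall n : nat, (1 <= n)%nat -> 0 < omega n) ->
     (exists m : R, 0 < m /\ forall n : nat, (1 <= n)%nat -> m <= omega n) ->
     (forall k : nat, (3 <= k)%nat ->
        ex_series (fun n : nat => / omega (k * 2 ^ n)%nat)) ->
     T_bounded omega ->
     chaotic omega)
  /\ chaotic omega0.
Proof. split.
  - intros omega H1 H2 H3 _. apply general; auto.
  - destruct omega0_ok as [H1 [H2 H3]]. apply general; auto. Qed.
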